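(* Let $T>0$, $L>0$, $\alpha\in\mathbb{R}\setminus\{0\}$ and let $n\ge 2$ be an integer. Let $x_0>L$, $0<t_0<T$, $\beta>0$, and set $\psi(t,x)=(x-x_0)^2-\beta(t-t_0)^2$. Then there exist a constant $C>0$ and, for each $m\in\{0,\dots,n-1\}$, functions $R_m(t,x;\lambda)$ satisfying $|R_m(t,x;\lambda)|\le C\lambda^{2n-2m-3}$ for all $(t,x)\in[0,T]\times[0,L]$ and all $\lambda\ge 1$, such that for every $\lambda\ge1$ and every $v\in C_0^\infty((0,T)\times(0,L);\mathbb{R})$, with $w=e^{\lambda\psi}v$, $$\sum_{m=0}^{n-1}\int_0^T\!\!\int_0^L\Big[n^2\binom{n-1}{m}\lambda^{2n-2m-1}\psi_x^{2n-2m-2}\psi_{xx}+R_m(t,x;\lambda)\Big]|\partial_x^m w|^2\,dx\,dt\le \int_0^T\!\!\int_0^L e^{2\lambda\psi}\big|\alpha\partial_t v+\partial_x^n v\big|^2\,dx\,dt.$$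
   Context: $\binom{j}{k}$ denotes the binomial coefficient (taken to be $0$ unless $0\le k\le j$). $\psi_x,\psi_{xx}$ denote partial derivatives of $\psi$ in $x$; here $\psi_x=2(x-x_0)$, $\psi_{xx}=2$. *)

(* Defs.v *)
From Stdlib Require Import Reals List.
From Coquelicot Require Import Coquelicot.
Open Scope R_scope.

Definition pdt (f : R -> R -> R) : R -> R -> R :=
  fun t x => Derive (fun s => f s x) t.
Definition pdx (f : R -> R -> R) : R -> R -> R :=
  fun t x => Derive (fun y => f t y) x.

Definition pdxn (m : nat) (f : R -> R -> R) : R -> R -> R :=
  fun t x => Derive_n (fun y => f t y) m x.

(* Iterated mixed partial derivative along a word (true = d/dt, false = d/dx),
   applied from the head of the list outwards. *)
Fixpoint pdword (w : list bool) (f : R -> R -> R) : R -> R -> R :=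
  match w with
  | nil => f
  | b :: w' => if b then pdt (pdword w' f) else pdx (pdword w' f)
  end.

Definition smooth2 (f : R -> R -> R) : Prop :=
  forall w : list bool,
    forall t x : R,
      ex_derive (fun s => pdword w f s x) t /\
      ex_derive (fun y => pdword w f t y) x /\
      continuous (fun p : R * R => pdword w f (fst p) (snd p)) (t, x).

(* v in C_0^infinity((0,T) x (0,L); R): smooth with support contained in a
   compact subset [a,b] x [c,d] of the open rectangle (extended by 0). *)
Definition Cc_inf (T L : R) (v : R -> R -> R) : Prop :=
  smooth2 v /\
  exists a b c d : R,
    0 < a /\ a <= b /\ b < T /\ 0 < c /\ c <= d /\ d < L /\
    forall t x, ~ (a <= t <= b /\ c <= x <= d) -> v t x = 0.

Definition psi (x0 t0 beta : R) (t x : R) : R :=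
  (x - x0) ^ 2 - beta * (t - t0) ^ 2.

Definition psi_x (x0 : R) (x : R) : R := 2 * (x - x0).
Definition psi_xx : R := 2.

Definition dint (T L : R) (f : R -> R -> R) : R :=
  RInt (fun t => RInt (fun x => f t x) 0 L) 0 T.

(* Main.v *)
Require Import Defs.
From Stdlib Require Import Reals ZArith Lra Lia Arith FunctionalExtensionality List.
From Coquelicot Require Import Coquelicot.
Open Scope R_scope.

Fixpoint gam (N : nat) : nat -> nat -> R :=
  match N with
  | O => fun m q => match m, q with O, O => 1 | _, _ => 0 end
  | S N' => fun m q =>
      (match m with O => 0 | S m' => gam N' m' q end)
      + gam N' m q
      + (match q with O => 0 | S q' => -(2 * INR N' - 2 * INR q + 3) * gam N' m q' end)
      + (match q with O | 1%nat => 0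
         | S (S q') => (INR m + 1) * (3 * INR m + 2 * INR q - 2 * INR N' - 2) * gam N' (S m) q' end)
      + (match q with O | 1%nat | 2%nat => 0
         | S (S (S q')) => (INR m + 1) * (2 * (INR N' - INR m - INR q + 2))
                            * (2 * (INR N' - INR m - INR q + 2) - 1) * gam N' (S m) q' end)
  end.

Lemma gam_zero : forall N m q, (N < m + q)%nat -> gam N m q = 0.
Proof.
  induction N as [|N IH]; intros m q H.
  - destruct m, q; simpl; try reflexivity; lia.
  - simpl.
    assert (A1 : match m with O => 0 | S m' => gam N m' q end = 0).
    { destruct m; [reflexivity| apply IH; lia]. }
    assert (A2 : gam N m q = 0) by (apply IH; lia).
    assert (A3 : match q with O => 0 | S q' => -(2 * INR N - 2 * INR q + 3) * gam N m q' end = 0).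
    { destruct q; [reflexivity|]. rewrite IH by lia. ring. }
    assert (A4 : match q with O | 1%nat => 0
         | S (S q') => (INR m + 1) * (3 * INR m + 2 * INR q - 2 * INR N - 2) * gam N (S m) q' end = 0).
    { destruct q as [|[|q]]; try reflexivity. rewrite IH by lia. ring. }
    assert (A5 : match q with O | 1%nat | 2%nat => 0
         | S (S (S q')) => (INR m + 1) * (2 * (INR N - INR m - INR q + 2))
                            * (2 * (INR N - INR m - INR q + 2) - 1) * gam N (S m) q' end = 0).
    { destruct q as [|[|[|q]]]; try reflexivity.
      destruct (Nat.lt_ge_cases N (S m + q)) as [Hl|Hl].
      - rewrite IH by lia. ring.
      - assert (N = (m + S (S (S q)) - 2)%nat) by lia.
        assert (E: INR N - INR m - INR (S (S (S q))) + 2 = 0).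
        { subst N. rewrite minus_INR by lia. rewrite plus_INR. simpl. ring. }
        rewrite E. ring. }
    rewrite A1, A2, A3, A4, A5. ring.
Qed.

Definition Cz (a b : nat) : R := if (b <=? a)%nat then Binomial.C a b else 0.

Lemma C_n0 : forall n, Binomial.C n 0 = 1.
Proof. intros n. unfold Binomial.C. rewrite Nat.sub_0_r. simpl. field. apply not_0_INR, fact_neq_0. Qed.
Lemma C_nn : forall n, Binomial.C n n = 1.
Proof. intros n. unfold Binomial.C. rewrite Nat.sub_diag. simpl. field. apply not_0_INR, fact_neq_0. Qed.

Lemma Cz_pascal : forall N m,
  Cz (S N) m = (match m with O => 0 | S m' => Cz N m' end) + Cz N m.
Proof.
  intros N m. unfold Cz. destruct m as [|m].
  - simpl. rewrite !C_n0. ring.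
  - simpl (S m <=? S N)%nat.
    destruct (Nat.leb_spec m N) as [H1|H1]; destruct (Nat.leb_spec (S m) N) as [H2|H2].
    + rewrite <- Binomial.pascal by lia. reflexivity.
    + assert (m = N) by lia. subst. rewrite Rplus_0_r.
      rewrite !C_nn. reflexivity.
    + lia.
    + ring.
Qed.

Lemma gam_q0 : forall N m, gam N m 0 = Cz N m.
Proof.
  induction N as [|N IH]; intros m.
  - destruct m; unfold Cz; simpl; [rewrite C_n0; reflexivity|reflexivity].
  - simpl. rewrite Cz_pascal. destruct m; rewrite ?IH; ring.
Qed.

Lemma gam_q1 : forall N m, gam N m 1 = - (INR N)^2 * Cz (N - 1) m.
Proof.
  induction N as [|N IH]; intros m.
  - destruct m; simpl; ring.
  - simpl gam. rewrite !gam_q0.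
    replace (S N - 1)%nat with N by lia.
    destruct N as [|N].
    + destruct m as [|[|m]]; simpl; ring.
    + replace (S N - 1)%nat with N in IH by lia.
      rewrite (Cz_pascal N m).
      destruct m as [|m]; rewrite ?IH; rewrite ?S_INR; simpl.
      all: ring.
Qed.

Definition Pa N m (s a : R) := sum_f_R0 (fun q => gam N m q * a ^ (2 * (N - m - q)) * s ^ q) N.
Definition Pd N m (s a : R) := sum_f_R0 (fun q => gam N m q * (INR (2 * (N - m - q)) * a ^ (pred (2 * (N - m - q)))) * s ^ q) N.
Definition Pdd N m (s a : R) := sum_f_R0 (fun q => gam N m q * (INR (2 * (N - m - q)) * (INR (pred (2 * (N - m - q))) * a ^ (pred (pred (2 * (N - m - q)))))) * s ^ q) N.

Lemma sum_shift1 : forall f N, sum_f_R0 f (S N) = f 0%nat + sum_f_R0 (fun q => f (S q)) N.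
Proof.
  intros f N; induction N as [|N IH].
  - simpl. ring.
  - change (sum_f_R0 f (S (S N))) with (sum_f_R0 f (S N) + f (S (S N))).
    rewrite IH. simpl. ring.
Qed.

Lemma sum_ext_zero : forall f N M, (N <= M)%nat -> (forall q, (N < q <= M)%nat -> f q = 0) ->
  sum_f_R0 f M = sum_f_R0 f N.
Proof.
  intros f N M H. induction H as [|M HM IH]; intros Hz.
  - reflexivity.
  - simpl. rewrite IH. rewrite Hz by lia. ring. intros q Hq; apply Hz; lia.
Qed.

Lemma sum_zero : forall f N, (forall q, (q <= N)%nat -> f q = 0) -> sum_f_R0 f N = 0.
Proof.
  intros f N H; induction N; simpl. apply H; lia. rewrite IHN, H; try lia; try ring. intros; apply H; lia.
Qed.

Lemma gamS : forall N m q, gam (S N) m q =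
      (match m with O => 0 | S m' => gam N m' q end)
      + gam N m q
      + (match q with O => 0 | S q' => -(2 * INR N - 2 * INR q + 3) * gam N m q' end)
      + (match q with O | 1%nat => 0
         | S (S q') => (INR m + 1) * (3 * INR m + 2 * INR q - 2 * INR N - 2) * gam N (S m) q' end)
      + (match q with O | 1%nat | 2%nat => 0
         | S (S (S q')) => (INR m + 1) * (2 * (INR N - INR m - INR q + 2))
                            * (2 * (INR N - INR m - INR q + 2) - 1) * gam N (S m) q' end).
Proof. reflexivity. Qed.

Lemma pow_pred_mul : forall a k, (INR k * (a * a ^ pred k)) = INR k * a ^ k.
Proof. intros a [|k]; simpl; ring. Qed.

Lemma lin_E3 : forall T D (s a c : R) N, sum_f_R0 (fun q => - s * (T q + a * D q) - c * T q) N
  = - s * (sum_f_R0 T N + a * sum_f_R0 D N) - c * sum_f_R0 T N.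
Proof. intros; induction N; simpl; [ring| rewrite IHN; ring]. Qed.
Lemma lin_E4 : forall T D (c1 c2 a : R) N, sum_f_R0 (fun q => c1 * T q - c2 * (T q + a * D q)) N
  = c1 * sum_f_R0 T N - c2 * (sum_f_R0 T N + a * sum_f_R0 D N).
Proof. intros; induction N; simpl; [ring| rewrite IHN; ring]. Qed.

Section Rec.
Lemma Pa_rec : forall N i s a,
  Pa (S N) i s a =
    (match i with O => 0 | S i' => Pa N i' s a end)
    + (a ^ 2 * Pa N i s a - s * (Pa N i s a + a * Pd N i s a) - 2 * INR i * s * Pa N i s a)
    + ((INR i + 1) ^ 2 * s ^ 2 * Pa N (S i) s a + (INR i + 1) * s ^ 3 * Pdd N (S i) s a
       - (INR i + 1) * s ^ 2 * (Pa N (S i) s a + a * Pd N (S i) s a)).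
Proof.
  intros N i s a.
  set (e := fun q => (a ^ (2 * (S N - i - q)) * s ^ q)).
  assert (Hsplit : Pa (S N) i s a =
     sum_f_R0 (fun q => (match i with O => 0 | S m' => gam N m' q end) * e q) (S N)
   + sum_f_R0 (fun q => gam N i q * e q) (S N)
   + sum_f_R0 (fun q => (match q with O => 0 | S q' => -(2 * INR N - 2 * INR q + 3) * gam N i q' end) * e q) (S N)
   + sum_f_R0 (fun q => (match q with O | 1%nat => 0
         | S (S q') => (INR i + 1) * (3 * INR i + 2 * INR q - 2 * INR N - 2) * gam N (S i) q' end) * e q) (S N)
   + sum_f_R0 (fun q => (match q with O | 1%nat | 2%nat => 0
         | S (S (S q')) => (INR i + 1) * (2 * (INR N - INR i - INR q + 2))
                            * (2 * (INR N - INR i - INR q + 2) - 1) * gam N (S i) q' end) * e q) (S N)).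
  { unfold Pa. fold e.
    assert (G : forall M, sum_f_R0 (fun q => gam (S N) i q * e q) M =
     sum_f_R0 (fun q => (match i with O => 0 | S m' => gam N m' q end) * e q) M
   + sum_f_R0 (fun q => gam N i q * e q) M
   + sum_f_R0 (fun q => (match q with O => 0 | S q' => -(2 * INR N - 2 * INR q + 3) * gam N i q' end) * e q) M
   + sum_f_R0 (fun q => (match q with O | 1%nat => 0
         | S (S q') => (INR i + 1) * (3 * INR i + 2 * INR q - 2 * INR N - 2) * gam N (S i) q' end) * e q) M
   + sum_f_R0 (fun q => (match q with O | 1%nat | 2%nat => 0
         | S (S (S q')) => (INR i + 1) * (2 * (INR N - INR i - INR q + 2))
                            * (2 * (INR N - INR i - INR q + 2) - 1) * gam N (S i) q' end) * e q) M).
    { induction M as [|M IH]; cbn [sum_f_R0].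
      - rewrite gamS. ring.
      - rewrite IH, gamS. ring. }
    rewrite <- G. apply sum_eq. intros; unfold e; ring. }
  rewrite Hsplit. clear Hsplit.
  assert (E1 : sum_f_R0 (fun q => (match i with O => 0 | S m' => gam N m' q end) * e q) (S N)
              = match i with O => 0 | S i' => Pa N i' s a end).
  { destruct i as [|i'].
    - apply sum_zero. intros; ring.
    - simpl sum_f_R0 at 1. rewrite (gam_zero N i' (S N)) by lia.
      unfold Pa, e. rewrite Rmult_0_l, Rplus_0_r. apply sum_eq. intros q Hq.
      simpl (S N - S i')%nat. ring. }
  assert (E2 : sum_f_R0 (fun q => gam N i q * e q) (S N) = a ^ 2 * Pa N i s a).
  { simpl sum_f_R0 at 1. rewrite (gam_zero N i (S N)) by lia. rewrite Rmult_0_l, Rplus_0_r.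
    unfold Pa. rewrite scal_sum.
    apply sum_eq. intros q Hq. unfold e.
    destruct (le_lt_dec (i + q) N) as [Hl|Hl].
    - replace (2 * (S N - i - q))%nat with (2 + 2 * (N - i - q))%nat by lia.
      rewrite pow_add. ring.
    - rewrite gam_zero by lia. ring. }
  assert (E3 : sum_f_R0 (fun q => (match q with O => 0 | S q' => -(2 * INR N - 2 * INR q + 3) * gam N i q' end) * e q) (S N)
       = - s * (Pa N i s a + a * Pd N i s a) - 2 * INR i * s * Pa N i s a).
  { rewrite sum_shift1. rewrite Rmult_0_l, Rplus_0_l.
    transitivity (sum_f_R0 (fun q => - s * (gam N i q * a ^ (2 * (N - i - q)) * s ^ q
                + a * (gam N i q * (INR (2 * (N - i - q)) * a ^ (pred (2 * (N - i - q)))) * s ^ q))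
                - 2 * INR i * s * (gam N i q * a ^ (2 * (N - i - q)) * s ^ q)) N).
    - apply sum_eq. intros q Hq. unfold e.
      destruct (le_lt_dec (i + q) N) as [Hl|Hl].
      + replace (2 * (S N - i - S q))%nat with (2 * (N - i - q))%nat by lia.
        rewrite S_INR, mult_INR, minus_INR, minus_INR by lia. simpl INR.
        replace (a * (gam N i q * ((1 + 1) * (INR N - INR i - INR q) * a ^ pred (2 * (N - i - q))) * s ^ q))
          with (gam N i q * s ^ q * (INR (2 * (N - i - q)) * (a * a ^ pred (2 * (N - i - q))))).
        2:{ rewrite mult_INR, minus_INR, minus_INR by lia. simpl INR. ring. }
        rewrite pow_pred_mul. rewrite mult_INR, minus_INR, minus_INR by lia. simpl INR. simpl pow. ring.
      + rewrite gam_zero by lia. ring.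
    - unfold Pa, Pd.
      exact (lin_E3 (fun q => gam N i q * a ^ (2 * (N - i - q)) * s ^ q)
        (fun q => gam N i q * (INR (2 * (N - i - q)) * a ^ (pred (2 * (N - i - q)))) * s ^ q) s a (2 * INR i * s) N). }
  assert (E4 : sum_f_R0 (fun q => (match q with O | 1%nat => 0
         | S (S q') => (INR i + 1) * (3 * INR i + 2 * INR q - 2 * INR N - 2) * gam N (S i) q' end) * e q) (S N)
       = (INR i + 1) ^ 2 * s ^ 2 * Pa N (S i) s a - (INR i + 1) * s ^ 2 * (Pa N (S i) s a + a * Pd N (S i) s a)).
  { rewrite <- (sum_ext_zero _ (S N) (S (S N))) by (try lia; intros q Hq;
        replace q with (S (S N)) by lia; rewrite gam_zero by lia; ring).
    rewrite sum_shift1, sum_shift1. rewrite !Rmult_0_l, !Rplus_0_l.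
    transitivity (sum_f_R0 (fun q => (INR i + 1) ^ 2 * s ^ 2 * (gam N (S i) q * a ^ (2 * (N - S i - q)) * s ^ q)
                - (INR i + 1) * s ^ 2 * (gam N (S i) q * a ^ (2 * (N - S i - q)) * s ^ q
                + a * (gam N (S i) q * (INR (2 * (N - S i - q)) * a ^ (pred (2 * (N - S i - q)))) * s ^ q))) N).
    - apply sum_eq. intros q Hq. unfold e.
      destruct (le_lt_dec (S i + q) N) as [Hl|Hl].
      + replace (2 * (S N - i - S (S q)))%nat with (2 * (N - S i - q))%nat by lia.
        replace (a * (gam N (S i) q * (INR (2 * (N - S i - q)) * a ^ pred (2 * (N - S i - q))) * s ^ q))
          with (gam N (S i) q * s ^ q * (INR (2 * (N - S i - q)) * (a * a ^ pred (2 * (N - S i - q))))) by ring.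
        rewrite pow_pred_mul. rewrite !S_INR, mult_INR, minus_INR, minus_INR by lia.
        rewrite !S_INR. simpl INR. simpl pow. ring.
      + rewrite gam_zero by lia. ring.
    - unfold Pa, Pd.
      exact (lin_E4 (fun q => gam N (S i) q * a ^ (2 * (N - S i - q)) * s ^ q)
        (fun q => gam N (S i) q * (INR (2 * (N - S i - q)) * a ^ (pred (2 * (N - S i - q)))) * s ^ q)
        ((INR i + 1) ^ 2 * s ^ 2) ((INR i + 1) * s ^ 2) a N). }
  assert (E5 : sum_f_R0 (fun q => (match q with O | 1%nat | 2%nat => 0
         | S (S (S q')) => (INR i + 1) * (2 * (INR N - INR i - INR q + 2))
                            * (2 * (INR N - INR i - INR q + 2) - 1) * gam N (S i) q' end) * e q) (S N)
       = (INR i + 1) * s ^ 3 * Pdd N (S i) s a).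
  { rewrite <- (sum_ext_zero _ (S N) (S (S (S N)))).
    2: lia.
    2:{ intros q Hq. destruct q as [|[|[|q]]]; try lia; try (cbv beta iota; ring; fail).
        destruct (le_lt_dec N (S i + q)) as [H1|H1]; [|lia].
        destruct (Nat.eq_dec N (S i + q)) as [H2|H2].
        - subst N. destruct i as [|i]; [|rewrite gam_zero by lia; ring].
          rewrite !S_INR. rewrite ?plus_INR. simpl INR. ring_simplify. ring.
        - rewrite gam_zero by lia. ring. }
    rewrite sum_shift1, sum_shift1, sum_shift1. rewrite !Rmult_0_l, !Rplus_0_l.
    unfold Pdd. rewrite scal_sum. apply sum_eq. intros q Hq. unfold e.
    destruct (le_lt_dec (S (S i) + q) N) as [Hl|Hl].
    - replace (2 * (S N - i - S (S (S q))))%nat with (pred (pred (2 * (N - S i - q))))%nat by lia.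
      replace (INR (pred (2 * (N - S i - q)))) with (2 * (INR N - INR i - INR q - 1) - 1).
      2:{ replace (pred (2 * (N - S i - q))) with (S (2 * (N - S (S i) - q)))%nat by lia.
          rewrite S_INR, mult_INR, !minus_INR by lia. rewrite !S_INR. simpl INR. ring. }
      rewrite mult_INR, !minus_INR by lia. rewrite !S_INR. simpl INR. simpl pow. ring.
    - destruct (le_lt_dec (S i + q) N) as [Hl2|Hl2].
      + assert (N = S i + q)%nat by lia. subst N.
        replace (S i + q - S i - q)%nat with 0%nat by lia.
        rewrite !plus_INR, !S_INR. simpl. ring.
      + rewrite gam_zero by lia. ring. }
  rewrite E1, E2, E3, E4, E5. ring.
Qed.
End Rec.

Definition OK (L : R) (u : nat -> R -> R) :=
  (forall j x, is_derive (u j) x (u (S j) x)) /\ (forall j, u j 0 = 0 /\ u j L = 0).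

Definition Esq (x0 s : R) (u : nat -> R -> R) : nat -> R -> R :=
  fun j x => u (S j) x + s * (x - x0) * u j x + INR j * s * u (pred j) x.

Fixpoint EN (x0 s : R) (N : nat) (u : nat -> R -> R) : nat -> R -> R :=
  match N with O => u | S N' => EN x0 s N' (Esq x0 s u) end.

Lemma EN_comm : forall x0 s N u, EN x0 s (S N) u = Esq x0 s (EN x0 s N u).
Proof.
  intros x0 s N. induction N as [|N IH]; intros u; [reflexivity|].
  change (EN x0 s (S (S N)) u) with (EN x0 s (S N) (Esq x0 s u)). rewrite IH. reflexivity.
Qed.

Lemma OK_Esq : forall L x0 s u, OK L u -> OK L (Esq x0 s u).
Proof.
  intros L x0 s u [Hd Hb]. split.
  - intros j x. unfold Esq.
    assert (Dd : forall k, Derive (fun y => u k y) x = u (S k) x).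
    { intros k. apply is_derive_unique, Hd. }
    auto_derive.
    + repeat split; eexists; apply Hd.
    + rewrite !Dd. destruct j as [|j]; simpl pred; rewrite ?S_INR; simpl; ring.
  - intros j. unfold Esq. destruct (Hb (S j)) as [H0 H1], (Hb j) as [H2 H3], (Hb (pred j)) as [H4 H5].
    split; [rewrite H0, H2, H4|rewrite H1, H3, H5]; ring.
Qed.

Lemma OK_EN : forall L x0 s N u, OK L u -> OK L (EN x0 s N u).
Proof. intros L x0 s N; induction N; intros u H; simpl; auto. apply IHN, OK_Esq, H. Qed.

Lemma is_derive_sumf : forall (f : nat -> R -> R) (df : nat -> R) y N,
  (forall q, is_derive (f q) y (df q)) ->
  is_derive (fun z => sum_f_R0 (fun q => f q z) N) y (sum_f_R0 df N).
Proof.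
  intros f df y N H. induction N as [|N IH]; simpl.
  - apply H.
  - apply (is_derive_plus (fun z => sum_f_R0 (fun q => f q z) N) (f (S N))); auto.
Qed.

Lemma der_mono : forall c d s x0 k y,
  is_derive (fun z => c * (s*(z-x0))^k * d) y (c * (INR k * s * (s*(y-x0))^(pred k)) * d).
Proof. intros. auto_derive; auto. replace (y + - x0) with (y - x0) by ring. ring. Qed.

Definition Bf N m s x0 := fun y => Pa N m s (s * (y - x0)).
Definition B1f N m s x0 := fun y => s * Pd N m s (s * (y - x0)).
Definition B2f N m s x0 := fun y => s ^ 2 * Pdd N m s (s * (y - x0)).

Lemma Bf_der : forall N m s x0 y, is_derive (Bf N m s x0) y (B1f N m s x0 y).
Proof.
  intros. unfold Bf, B1f, Pa, Pd.
  eapply is_derive_ext; [intros; reflexivity|].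
  replace (s * sum_f_R0 _ N) with
    (sum_f_R0 (fun q => gam N m q * (INR (2 * (N - m - q)) * s * (s * (y - x0)) ^ pred (2 * (N - m - q))) * s ^ q) N).
  - apply is_derive_sumf. intros q. apply der_mono.
  - rewrite scal_sum. apply sum_eq. intros; ring.
Qed.

Lemma B1f_der : forall N m s x0 y, is_derive (B1f N m s x0) y (B2f N m s x0 y).
Proof.
  intros. unfold B2f, B1f, Pdd, Pd.
  apply (is_derive_ext (fun z => sum_f_R0 (fun q => (s * gam N m q * INR (2 * (N - m - q))) * (s * (z - x0)) ^ pred (2 * (N - m - q)) * s ^ q) N)).
  { intros z. rewrite scal_sum. apply sum_eq. intros; ring. }
  replace (s ^ 2 * sum_f_R0 _ N) with
    (sum_f_R0 (fun q => (s * gam N m q * INR (2 * (N - m - q))) * (INR (pred (2 * (N - m - q))) * s * (s * (y - x0)) ^ pred (pred (2 * (N - m - q)))) * s ^ q) N).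
  - apply is_derive_sumf. intros q. apply der_mono.
  - rewrite scal_sum. apply sum_eq. intros; simpl; ring.
Qed.

Lemma B2f_cont : forall N m s x0 y, continuous (B2f N m s x0) y.
Proof.
  intros. apply (@ex_derive_continuous R_AbsRing R_NormedModule). unfold B2f, Pdd.
  eexists.
  apply (is_derive_ext (fun z => sum_f_R0 (fun q => (s ^ 2 * gam N m q * INR (2 * (N - m - q)) * INR (pred (2 * (N - m - q)))) * (s * (z - x0)) ^ pred (pred (2 * (N - m - q))) * s ^ q) N)).
  { intros z. rewrite scal_sum. apply sum_eq. intros; ring. }
  apply is_derive_sumf. intros q. apply der_mono.
Qed.

Lemma ftc0 : forall L (F dF : R -> R), 0 <= L -> (forall x, is_derive F x (dF x)) -> (forall x, continuous dF x) ->
  F 0 = 0 -> F L = 0 -> RInt dF 0 L = 0.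
Proof.
  intros L F dF HL Hd Hc H0 HL'.
  assert (H := is_RInt_derive F dF 0 L (fun x _ => Hd x) (fun x _ => Hc x)).
  apply is_RInt_unique in H. rewrite H, H0, HL'. unfold minus, plus, opp; simpl; ring.
Qed.

Lemma cont_plus : forall (f g : R -> R) x, continuous f x -> continuous g x -> continuous (fun y => f y + g y) x.
Proof. intros. apply (continuous_plus f g); auto. Qed.
Lemma cont_minus : forall (f g : R -> R) x, continuous f x -> continuous g x -> continuous (fun y => f y - g y) x.
Proof. intros. apply (continuous_minus f g); auto. Qed.
Lemma cont_mult : forall (f g : R -> R) x, continuous f x -> continuous g x -> continuous (fun y => f y * g y) x.
Proof. intros. apply (continuous_mult f g); auto. Qed.
Lemma cont_const : forall (c : R) (x : R), continuous (fun _ : R => c) x.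
Proof. intros. apply continuous_const. Qed.
Lemma cont_id : forall x, continuous (fun y : R => y) x.
Proof. intros. apply continuous_id. Qed.
Lemma cont_pow : forall (f : R -> R) k x, continuous f x -> continuous (fun y => f y ^ k) x.
Proof. intros f k x H. induction k; simpl. apply cont_const. apply (cont_mult f (fun y => f y ^ k)); auto. Qed.
Lemma cont_der : forall (f df : R -> R) (x : R), (forall y, is_derive f y (df y)) -> continuous f x.
Proof. intros. apply (@ex_derive_continuous R_AbsRing R_NormedModule). eexists; eauto. Qed.

Ltac cont_tac :=
  repeat match goal with
  | |- continuous (fun y => _ + _) _ => apply cont_plus
  | |- continuous (fun y => _ - _) _ => apply cont_minus
  | |- continuous (fun y => _ * _) _ => apply cont_mult
  | |- continuous (fun y => _ ^ _) _ => apply cont_pow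
  | |- continuous (fun y => y) _ => apply cont_id
  | |- continuous (fun _ => _) _ => apply cont_const
  | |- continuous (fun y => Bf _ _ _ _ y) _ => apply (cont_der _ _ _ (Bf_der _ _ _ _))
  | |- continuous (fun y => B1f _ _ _ _ y) _ => apply (cont_der _ _ _ (B1f_der _ _ _ _))
  | |- continuous (fun y => B2f _ _ _ _ y) _ => apply B2f_cont
  | H : forall j x, is_derive (?u j) x _ |- continuous (fun y => ?u _ y) _ => apply (cont_der _ _ _ (H _))
  end.

Ltac ct := repeat match goal with
 | |- continuous (fun y => ?c) _ => apply cont_const
 | |- continuous (fun y => y) _ => apply cont_id
 | |- continuous (fun y => _ - _) _ => apply cont_minus
 | |- continuous (fun y => _ + _) _ => apply cont_plus
 | |- continuous (fun y => _ * _) _ => apply cont_mult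
 | |- continuous (fun y => _ ^ _) _ => apply cont_pow
 | |- _ => solve [auto]
 end.

Lemma RInt_add : forall (f g : R -> R) a b, ex_RInt f a b -> ex_RInt g a b ->
  RInt (fun x => f x + g x) a b = RInt f a b + RInt g a b.
Proof. intros. apply (RInt_plus f g); auto. Qed.

Lemma exR : forall (f : R -> R) a b, (forall x, continuous f x) -> ex_RInt f a b.
Proof. intros. apply (@ex_RInt_continuous R_CompleteNormedModule). intros; auto. Qed.


Lemma RInt_ext_R : forall (f g : R -> R) a b, (forall x, f x = g x) -> RInt f a b = RInt g a b.
Proof. intros. apply RInt_ext. intros; auto. Qed.

Lemma Esq_der : forall x0 s u, (forall j x, is_derive (u j) x (u (S j) x)) ->
  forall j x, is_derive (Esq x0 s u j) x (Esq x0 s u (S j) x).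
Proof.
  intros x0 s u Hd j x. unfold Esq.
  assert (Dd : forall k, Derive (fun y => u k y) x = u (S k) x).
  { intros k. apply is_derive_unique, Hd. }
  auto_derive.
  + repeat match goal with |- _ /\ _ => split end; try exact I; eexists; apply Hd.
  + rewrite !Dd. destruct j as [|j]; simpl pred; rewrite ?S_INR; simpl; ring.
Qed.

Lemma EN_der : forall x0 s N u, (forall j x, is_derive (u j) x (u (S j) x)) ->
  forall j x, is_derive (EN x0 s N u j) x (EN x0 s N u (S j) x).
Proof. intros x0 s N; induction N; intros u H; simpl; auto. apply IHN. apply Esq_der; auto. Qed.

Lemma PM : forall L x0 s N m u, 0 <= L -> OK L u ->
  RInt (fun x => Bf N m s x0 x * (Esq x0 s u m x) ^ 2) 0 L =
  RInt (fun x => Bf N m s x0 x * (u (S m) x) ^ 2) 0 L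
  + RInt (fun x => ((s * (x - x0)) ^ 2 * Bf N m s x0 x - (s * Bf N m s x0 x + s * (x - x0) * B1f N m s x0 x)
                  - 2 * INR m * s * Bf N m s x0 x) * (u m x) ^ 2) 0 L
  + RInt (fun x => (INR m ^ 2 * s ^ 2 * Bf N m s x0 x + INR m * s * B2f N m s x0 x
                  - INR m * s * (s * Bf N m s x0 x + s * (x - x0) * B1f N m s x0 x)) * (u (pred m) x) ^ 2) 0 L.
Proof.
  intros L x0 s N m u HL [Hd Hb].
  set (B := Bf N m s x0). set (B1 := B1f N m s x0). set (B2 := B2f N m s x0).
  assert (HB : forall y, is_derive B y (B1 y)) by apply Bf_der.
  assert (HB1 : forall y, is_derive B1 y (B2 y)) by apply B1f_der.
  assert (cB2 : forall y, continuous B2 y) by apply B2f_cont.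
  set (g1 := fun x => B x * (u (S m) x) ^ 2).
  set (g2 := fun x => ((s * (x - x0)) ^ 2 * B x - (s * B x + s * (x - x0) * B1 x) - 2 * INR m * s * B x) * (u m x) ^ 2).
  set (g3 := fun x => (INR m ^ 2 * s ^ 2 * B x + INR m * s * B2 x
                  - INR m * s * (s * B x + s * (x - x0) * B1 x)) * (u (pred m) x) ^ 2).
  set (G := fun x => B x * (Esq x0 s u m x) ^ 2 - (g1 x + g2 x + g3 x)).
  assert (cu : forall j x, continuous (u j) x) by (intros; apply (cont_der _ _ _ (Hd j))).
  assert (cB : forall x, continuous B x) by (intros; apply (cont_der _ _ _ HB)).
  assert (cB1 : forall x, continuous B1 x) by (intros; apply (cont_der _ _ _ HB1)).
  clearbody B B1 B2.
  assert (Hc1 : forall x, continuous g1 x) by (intros; unfold g1; ct).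
  assert (Hc2 : forall x, continuous g2 x) by (intros; unfold g2; ct).
  assert (Hc3 : forall x, continuous g3 x) by (intros; unfold g3; ct).
  assert (HcG : forall x, continuous G x) by (intros; unfold G, Esq; ct).
  assert (exu : forall j x, ex_derive (u j) x) by (intros; eexists; apply Hd).
  assert (exB : forall x, ex_derive B x) by (intros; eexists; apply HB).
  assert (exB1 : forall x, ex_derive B1 x) by (intros; eexists; apply HB1).
  assert (HG : RInt G 0 L = 0).
  { destruct m as [|m].
    - apply (ftc0 L (fun x => B x * (s * (x - x0)) * (u 0%nat x) ^ 2)); auto.
      + intros x. auto_derive.
        * repeat match goal with |- _ /\ _ => split end; try exact I; first [exact (exu _ _) | exact (exB _) | exact (exB1 _)].
        * replace (Derive (fun x1 => B x1) x) with (B1 x) by (symmetry; apply is_derive_unique, HB).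
          replace (Derive (fun x1 => u 0%nat x1) x) with (u 1%nat x) by (symmetry; apply is_derive_unique, Hd).
          unfold G, g1, g2, g3, Esq. simpl pred. simpl INR. ring.
      + destruct (Hb 0%nat) as [E _]. rewrite E. ring.
      + destruct (Hb 0%nat) as [_ E]. rewrite E. ring.
    - apply (ftc0 L (fun x => B x * (s * (x - x0)) * (u (S m) x) ^ 2
          + 2 * INR (S m) * s * B x * u (S m) x * u m x - INR (S m) * s * B1 x * (u m x) ^ 2
          + INR (S m) * s * B x * (s * (x - x0)) * (u m x) ^ 2)); auto.
      + intros x. auto_derive.
        * repeat match goal with |- _ /\ _ => split end; try exact I; first [exact (exu _ _) | exact (exB _) | exact (exB1 _)].
        * replace (Derive (fun x1 => B x1) x) with (B1 x) by (symmetry; apply is_derive_unique, HB).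
          replace (Derive (fun x1 => B1 x1) x) with (B2 x) by (symmetry; apply is_derive_unique, HB1).
          replace (Derive (fun x1 => u (S m) x1) x) with (u (S (S m)) x) by (symmetry; apply is_derive_unique, Hd).
          replace (Derive (fun x1 => u m x1) x) with (u (S m) x) by (symmetry; apply is_derive_unique, Hd).
          unfold G, g1, g2, g3, Esq. change (pred (S m)) with m.
          replace (match m with 0%nat => 1 | S _ => INR m + 1 end) with (INR m + 1) by (destruct m; simpl; ring).
          rewrite S_INR. ring.
      + destruct (Hb (S m)) as [E _]. destruct (Hb m) as [E' _]. rewrite E, E'. ring.
      + destruct (Hb (S m)) as [_ E]. destruct (Hb m) as [_ E']. rewrite E, E'. ring. }
  assert (Hex : forall f, (forall x, continuous f x) -> ex_RInt f 0 L) by (intros; apply exR; auto).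
  transitivity (RInt (fun x => G x + (g1 x + g2 x + g3 x)) 0 L).
  { apply RInt_ext_R. intros. unfold G. ring. }
  rewrite RInt_add, HG, Rplus_0_l, RInt_add, RInt_add; auto.
  all: apply Hex; intros; ct.
Qed.

Definition Iq (L : R) (f : R -> R) (j : nat) (u : nat -> R -> R) := RInt (fun x => f x * (u j x) ^ 2) 0 L.

Lemma Iq_add : forall L f g j u, (forall j x, continuous (u j) x) -> (forall x, continuous f x) -> (forall x, continuous g x) ->
  Iq L (fun x => f x + g x) j u = Iq L f j u + Iq L g j u.
Proof.
  intros. unfold Iq. rewrite <- RInt_add. apply RInt_ext_R; intros; ring.
  all: apply exR; intros; ct.
Qed.

Lemma Iq_zero : forall L f j u, (forall x, f x = 0) -> Iq L f j u = 0.
Proof.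
  intros. unfold Iq. rewrite (RInt_ext_R _ (fun _ => 0)). rewrite RInt_const. unfold scal; simpl; unfold mult; simpl; ring.
  intros; rewrite H; ring.
Qed.

Lemma Iq_ext : forall L f g j u, (forall x, f x = g x) -> Iq L f j u = Iq L g j u.
Proof. intros. unfold Iq. apply RInt_ext_R. intros; rewrite H; ring. Qed.

Lemma Bf_zero : forall N m s x0 x, (N < m)%nat -> Bf N m s x0 x = 0 /\ B1f N m s x0 x = 0 /\ B2f N m s x0 x = 0.
Proof.
  intros. unfold Bf, B1f, B2f, Pa, Pd, Pdd.
  repeat split; [| rewrite sum_zero; [ring|] | rewrite sum_zero; [ring|]]; try (apply sum_zero); intros q Hq;
   rewrite gam_zero by lia; ring.
Qed.

Lemma sum_plus3 : forall f g h N, sum_f_R0 (fun m => f m + g m + h m) N = sum_f_R0 f N + sum_f_R0 g N + sum_f_R0 h N.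
Proof. intros; induction N; simpl; [ring| rewrite IHN; ring]. Qed.

Lemma QF : forall L x0 s N u, 0 <= L -> OK L u ->
  RInt (fun x => (EN x0 s N u 0%nat x) ^ 2) 0 L =
  sum_f_R0 (fun m => RInt (fun x => Bf N m s x0 x * (u m x) ^ 2) 0 L) N.
Proof.
  intros L x0 s N. induction N as [|N IH]; intros u HL Hu.
  - simpl. apply RInt_ext_R. intros x. unfold Bf, Pa. simpl. ring.
  - change (EN x0 s (S N) u) with (EN x0 s N (Esq x0 s u)).
    rewrite IH by (auto; apply OK_Esq; auto).
    assert (Hd := proj1 Hu).
    assert (cu : forall j x, continuous (u j) x) by (intros; apply (cont_der _ _ _ (Hd j))).
    assert (cB : forall N m x, continuous (Bf N m s x0) x) by (intros; apply (cont_der _ _ _ (Bf_der _ _ _ _))).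
    assert (cB1 : forall N m x, continuous (B1f N m s x0) x) by (intros; apply (cont_der _ _ _ (B1f_der _ _ _ _))).
    assert (cB2 : forall N m x, continuous (B2f N m s x0) x) by (intros; apply B2f_cont).
    set (c1 := fun m x => (s * (x - x0)) ^ 2 * Bf N m s x0 x - (s * Bf N m s x0 x + s * (x - x0) * B1f N m s x0 x)
                  - 2 * INR m * s * Bf N m s x0 x).
    set (c2 := fun m x => INR m ^ 2 * s ^ 2 * Bf N m s x0 x + INR m * s * B2f N m s x0 x
                  - INR m * s * (s * Bf N m s x0 x + s * (x - x0) * B1f N m s x0 x)).
    set (pv := fun i x => match i with O => 0 | S i' => Bf N i' s x0 x end).
    assert (cc1 : forall m x, continuous (c1 m) x) by (intros; unfold c1; ct).
    assert (cc2 : forall m x, continuous (c2 m) x) by (intros; unfold c2; ct).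
    assert (cpv : forall m x, continuous (pv m) x) by (intros; unfold pv; destruct m; ct).
    transitivity (sum_f_R0 (fun m => Iq L (Bf N m s x0) (S m) u + Iq L (c1 m) m u + Iq L (c2 m) (pred m) u) N).
    { apply sum_eq. intros m Hm. apply PM; auto. }
    rewrite sum_plus3.
    assert (EA : sum_f_R0 (fun m => Iq L (Bf N m s x0) (S m) u) N = sum_f_R0 (fun i => Iq L (pv i) i u) (S N)).
    { rewrite sum_shift1. rewrite Iq_zero by (intros; reflexivity). rewrite Rplus_0_l. reflexivity. }
    assert (EB : sum_f_R0 (fun m => Iq L (c1 m) m u) N = sum_f_R0 (fun i => Iq L (c1 i) i u) (S N)).
    { simpl sum_f_R0 at 2. rewrite (Iq_zero _ (c1 (S N))). ring.
      intros x. unfold c1. destruct (Bf_zero N (S N) s x0 x) as [E1 [E2 _]]; [lia|]. rewrite E1, E2. ring. }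
    assert (EC : sum_f_R0 (fun m => Iq L (c2 m) (pred m) u) N = sum_f_R0 (fun i => Iq L (c2 (S i)) i u) (S N)).
    { rewrite <- (sum_ext_zero _ N (S N)).
      - rewrite sum_shift1. rewrite (Iq_zero _ (c2 0%nat)) by (intros; unfold c2; simpl; ring).
        rewrite Rplus_0_l. simpl sum_f_R0 at 2. rewrite (Iq_zero _ (c2 (S (S N)))). rewrite Rplus_0_r. reflexivity.
        intros x. unfold c2. destruct (Bf_zero N (S (S N)) s x0 x) as [E1 [E2 E3]]; [lia|]. rewrite E1, E2, E3. ring.
      - lia.
      - intros q Hq. replace q with (S N) by lia. apply Iq_zero.
        intros x. unfold c2. destruct (Bf_zero N (S N) s x0 x) as [E1 [E2 E3]]; [lia|]. rewrite E1, E2, E3. ring. }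
    rewrite EA, EB, EC, <- sum_plus3. apply sum_eq. intros i Hi.
    rewrite <- !Iq_add; auto.
    apply Iq_ext. intros x. unfold pv, c1, c2, Bf, B1f, B2f. rewrite Pa_rec.
    destruct i as [|i]; rewrite ?S_INR; ring.
    all: intros; unfold pv; try destruct i; ct.
Qed.

Lemma RInt_scalR : forall c (f : R -> R) a b, ex_RInt f a b -> RInt (fun x => c * f x) a b = c * RInt f a b.
Proof. intros. apply (RInt_scal f a b c). auto. Qed.

Lemma IBP : forall L (u v : nat -> R -> R) i j, 0 <= L -> OK L u -> OK L v ->
  RInt (fun x => u i x * v (S j) x) 0 L = - RInt (fun x => u (S i) x * v j x) 0 L.
Proof.
  intros L u v i j HL [Hu Hbu] [Hv Hbv].
  assert (cu : forall k x, continuous (u k) x) by (intros k ?; apply (cont_der _ _ _ (Hu k))).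
  assert (cv : forall k x, continuous (v k) x) by (intros k ?; apply (cont_der _ _ _ (Hv k))).
  assert (H0 : RInt (fun x => u (S i) x * v j x + u i x * v (S j) x) 0 L = 0).
  { apply (ftc0 L (fun x => u i x * v j x)); auto.
    - intros x. apply (is_derive_mult (u i) (v j)); auto. intros; apply Rmult_comm.
    - intros; ct.
    - destruct (Hbu i) as [E _]; rewrite E; ring.
    - destruct (Hbu i) as [_ E]; rewrite E; ring. }
  rewrite RInt_add in H0 by (apply exR; intros; ct). lra.
Qed.

Lemma ADJ : forall L x0 s N u v, 0 <= L -> OK L u -> OK L v ->
  RInt (fun x => u 0%nat x * EN x0 s N v 0%nat x) 0 L
  = (-1) ^ N * RInt (fun x => EN x0 (- s) N u 0%nat x * v 0%nat x) 0 L.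
Proof.
  intros L x0 s N. induction N as [|N IH]; intros u v HL Hu Hv.
  - simpl. now rewrite Rmult_1_l.
  - change (EN x0 s (S N) v) with (EN x0 s N (Esq x0 s v)).
    rewrite IH by (auto; apply OK_Esq; auto).
    rewrite EN_comm.
    set (U := EN x0 (-s) N u).
    assert (HU : OK L U) by (apply OK_EN; auto).
    assert (cU : forall j x, continuous (U j) x) by (intros; apply (cont_der _ _ _ (proj1 HU j))).
    assert (cv : forall j x, continuous (v j) x) by (intros; apply (cont_der _ _ _ (proj1 Hv j))).
    unfold Esq. simpl INR. simpl pred.
    rewrite (RInt_ext_R _ (fun x => U 0%nat x * v 1%nat x + s * (x - x0) * (U 0%nat x * v 0%nat x))) by (intros; ring).
    rewrite (RInt_ext_R (fun x => (U 1%nat x + - s * (x - x0) * U 0%nat x + 0 * - s * U 0%nat x) * v 0%nat x)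
               (fun x => U 1%nat x * v 0%nat x + (-1) * (s * (x - x0) * (U 0%nat x * v 0%nat x)))) by (intros; ring).
    rewrite !RInt_add by (apply exR; intros; ct).
    rewrite (IBP L U v 0 0) by auto.
    rewrite (RInt_scalR (-1)) by (apply exR; intros; ct). match goal with |- @eq _ ?a ?b => change (@eq R a b) end; simpl; ring.
Qed.

Definition P2 (f : R -> R -> R) :=
  forall t x, ex_derive (fun s => f s x) t /\ ex_derive (fun y => f t y) x /\ continuity_2d_pt f t x.

Inductive RC (S : (R -> R -> R) -> Prop) : (R -> R -> R) -> Prop :=
| RC_base f : S f -> RC S f
| RC_const c : RC S (fun _ _ => c)
| RC_plus f g : RC S f -> RC S g -> RC S (fun t x => f t x + g t x)
| RC_mult f g : RC S f -> RC S g -> RC S (fun t x => f t x * g t x).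

Definition closedS (S : (R -> R -> R) -> Prop) :=
  forall f, S f -> P2 f /\ RC S (pdt f) /\ RC S (pdx f).

Lemma RC_closed : forall S, closedS S -> forall f, RC S f -> P2 f /\ RC S (pdt f) /\ RC S (pdx f).
Proof.
  intros S HS f Hf. induction Hf as [f Hf|c|f g Hf IHf Hg IHg|f g Hf IHf Hg IHg].
  - apply HS, Hf.
  - split; [|split].
    + intros t x. split; [|split]; [apply ex_derive_const|apply ex_derive_const|apply continuity_2d_pt_const].
    + replace (pdt (fun _ _ => c)) with (fun _ _ : R => 0). apply RC_const.
      unfold pdt. apply functional_extensionality; intro t; apply functional_extensionality; intro x.
      rewrite Derive_const. reflexivity.
    + replace (pdx (fun _ _ => c)) with (fun _ _ : R => 0). apply RC_const.
      unfold pdx. apply functional_extensionality; intro t; apply functional_extensionality; intro x.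
      rewrite Derive_const. reflexivity.
  - destruct IHf as [Pf [Tf Xf]], IHg as [Pg [Tg Xg]].
    split; [|split].
    + intros t x. destruct (Pf t x) as [a1 [a2 a3]], (Pg t x) as [b1 [b2 b3]].
      split; [|split]; [apply (ex_derive_plus (fun s => f s x) (fun s => g s x))|
                        apply (ex_derive_plus (fun y => f t y) (fun y => g t y))|
                        apply continuity_2d_pt_plus]; auto.
    + replace (pdt (fun t x => f t x + g t x)) with (fun t x => pdt f t x + pdt g t x). apply RC_plus; auto.
      unfold pdt. apply functional_extensionality; intro t; apply functional_extensionality; intro x.
      destruct (Pf t x) as [a1 _], (Pg t x) as [b1 _]. rewrite (Derive_plus (fun s => f s x) (fun s => g s x)); auto.
    + replace (pdx (fun t x => f t x + g t x)) with (fun t x => pdx f t x + pdx g t x). apply RC_plus; auto.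
      unfold pdx. apply functional_extensionality; intro t; apply functional_extensionality; intro x.
      destruct (Pf t x) as [_ [a1 _]], (Pg t x) as [_ [b1 _]]. rewrite (Derive_plus (fun s => f t s) (fun s => g t s)); auto.
  - destruct IHf as [Pf [Tf Xf]], IHg as [Pg [Tg Xg]].
    split; [|split].
    + intros t x. destruct (Pf t x) as [a1 [a2 a3]], (Pg t x) as [b1 [b2 b3]].
      split; [|split]; [apply (ex_derive_mult (fun s => f s x) (fun s => g s x))|
                        apply (ex_derive_mult (fun y => f t y) (fun y => g t y))|
                        apply continuity_2d_pt_mult]; auto.
    + replace (pdt (fun t x => f t x * g t x)) with (fun t x => pdt f t x * g t x + f t x * pdt g t x).
      apply RC_plus; apply RC_mult; auto.
      unfold pdt. apply functional_extensionality; intro t; apply functional_extensionality; intro x.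
      destruct (Pf t x) as [a1 _], (Pg t x) as [b1 _]. rewrite (Derive_mult (fun s => f s x) (fun s => g s x)); auto.
    + replace (pdx (fun t x => f t x * g t x)) with (fun t x => pdx f t x * g t x + f t x * pdx g t x).
      apply RC_plus; apply RC_mult; auto.
      unfold pdx. apply functional_extensionality; intro t; apply functional_extensionality; intro x.
      destruct (Pf t x) as [_ [a1 _]], (Pg t x) as [_ [b1 _]]. rewrite (Derive_mult (fun s => f t s) (fun s => g t s)); auto.
Qed.

Lemma RC_pdword : forall S, closedS S -> forall w f, RC S f -> RC S (pdword w f).
Proof.
  intros S HS w. induction w as [|b w IH]; intros f Hf; simpl; auto.
  destruct b; apply (RC_closed S HS); auto.
Qed.

Lemma RC_smooth : forall S, closedS S -> forall f, RC S f -> smooth2 f.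
Proof.
  intros S HS f Hf w t x.
  destruct (RC_closed S HS _ (RC_pdword S HS w f Hf)) as [P _].
  destruct (P t x) as [a1 [a2 a3]]. split; [|split]; auto.
  apply continuity_2d_pt_filterlim in a3. exact a3.
Qed.

Lemma RC_P2 : forall S, closedS S -> forall f, RC S f -> P2 f.
Proof. intros. apply (RC_closed S H f H0). Qed.
Lemma RC_pdt : forall S, closedS S -> forall f, RC S f -> RC S (pdt f).
Proof. intros. apply (RC_closed S H f H0). Qed.
Lemma RC_pdx : forall S, closedS S -> forall f, RC S f -> RC S (pdx f).
Proof. intros. apply (RC_closed S H f H0). Qed.

Lemma RC_minus : forall S f g, RC S f -> RC S g -> RC S (fun t x => f t x - g t x).
Proof.
  intros. replace (fun t x => f t x - g t x) with (fun t x => f t x + (fun _ _ => -1) t x * g t x).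
  apply RC_plus; auto. apply RC_mult; auto. apply RC_const.
  apply functional_extensionality; intro t; apply functional_extensionality; intro x. ring.
Qed.
Lemma RC_pow : forall S f k, RC S f -> RC S (fun t x => f t x ^ k).
Proof.
  intros S f k H. induction k; simpl. apply RC_const. apply (RC_mult S f (fun t x => f t x ^ k)); auto.
Qed.

Definition Ew (lam x0 t0 beta : R) := fun t x => exp (lam * psi x0 t0 beta t x).

Definition S0 (lam x0 t0 beta : R) (v : R -> R -> R) (f : R -> R -> R) :=
  (exists w, f = pdword w v) \/ f = (fun t x => x) \/ f = (fun t x => t) \/ f = Ew lam x0 t0 beta.

Lemma funext2 : forall (f g : R -> R -> R), (forall t x, f t x = g t x) -> f = g.
Proof. intros. apply functional_extensionality; intro t; apply functional_extensionality; intro x. auto. Qed.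

Lemma Ew_pdt : forall lam x0 t0 beta, pdt (Ew lam x0 t0 beta) =
  fun t x => Ew lam x0 t0 beta t x * (2 * lam * beta * t0 + -2 * lam * beta * t).
Proof.
  intros. apply funext2; intros t x; unfold pdt. apply is_derive_unique. unfold Ew at 1, psi. auto_derive; auto.
  match goal with |- context [exp ?A] => replace (exp A) with (Ew lam x0 t0 beta t x) by (unfold Ew, psi; f_equal; ring) end; ring.
Qed.
Lemma Ew_pdx : forall lam x0 t0 beta, pdx (Ew lam x0 t0 beta) =
  fun t x => Ew lam x0 t0 beta t x * (-2 * lam * x0 + 2 * lam * x).
Proof.
  intros. apply funext2; intros t x; unfold pdx. apply is_derive_unique. unfold Ew at 1, psi. auto_derive; auto.
  match goal with |- context [exp ?A] => replace (exp A) with (Ew lam x0 t0 beta t x) by (unfold Ew, psi; f_equal; ring) end; ring.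
Qed.
Lemma Ew_P2 : forall lam x0 t0 beta, P2 (Ew lam x0 t0 beta).
Proof.
  intros. intros t x. unfold Ew, psi. split; [|split]. auto_derive; auto. auto_derive; auto.
  apply (continuity_1d_2d_pt_comp exp (fun t x => lam * ((x - x0) ^ 2 - beta * (t - t0) ^ 2))).
  - apply continuity_pt_filterlim. apply (@ex_derive_continuous R_AbsRing R_NormedModule). auto_derive; auto.
  - apply continuity_2d_pt_mult. apply continuity_2d_pt_const.
    apply continuity_2d_pt_minus.
    + apply (continuity_2d_pt_ext (fun t x => (x - x0) * (x - x0))). intros; simpl; ring.
      apply continuity_2d_pt_mult; apply continuity_2d_pt_minus; try apply continuity_2d_pt_id2; apply continuity_2d_pt_const.
    + apply (continuity_2d_pt_ext (fun t x => beta * ((t - t0) * (t - t0)))). intros; simpl; ring.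
      apply continuity_2d_pt_mult. apply continuity_2d_pt_const.
      apply continuity_2d_pt_mult; apply continuity_2d_pt_minus; try apply continuity_2d_pt_id1; apply continuity_2d_pt_const.
Qed.

Lemma S0_closed : forall lam x0 t0 beta v, smooth2 v -> closedS (S0 lam x0 t0 beta v).
Proof.
  intros lam x0 t0 beta v Hv f Hf.
  destruct Hf as [[w ->]|[->|[->| ->]]].
  - split; [|split].
    + intros t x. destruct (Hv w t x) as [a1 [a2 a3]]. split; [|split]; auto.
      apply continuity_2d_pt_filterlim. exact a3.
    + apply RC_base. left. exists (true :: w). reflexivity.
    + apply RC_base. left. exists (false :: w). reflexivity.
  - split; [|split].
    + intros t x. split; [|split]. apply ex_derive_const. apply ex_derive_id. apply continuity_2d_pt_id2.
    + replace (pdt (fun _ x => x)) with (fun _ _ : R => 0). apply RC_const.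
      apply funext2; intros; unfold pdt; rewrite Derive_const; auto.
    + replace (pdx (fun _ x => x)) with (fun _ _ : R => 1). apply RC_const.
      apply funext2; intros; unfold pdx. symmetry. apply (Derive_id x).
  - split; [|split].
    + intros t x. split; [|split]. apply ex_derive_id. apply ex_derive_const. apply continuity_2d_pt_id1.
    + replace (pdt (fun t _ => t)) with (fun _ _ : R => 1). apply RC_const.
      apply funext2; intros; unfold pdt. symmetry. apply (Derive_id t).
    + replace (pdx (fun t _ => t)) with (fun _ _ : R => 0). apply RC_const.
      apply funext2; intros; unfold pdx; rewrite Derive_const; auto.
  - split; [|split].
    + apply Ew_P2.
    + rewrite Ew_pdt.
      apply RC_mult; [apply RC_base; right; right; right; reflexivity|].
      apply (RC_plus _ (fun _ _ => 2 * lam * beta * t0) (fun t _ => -2 * lam * beta * t)); [apply RC_const|].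
      apply (RC_mult _ (fun _ _ => -2 * lam * beta) (fun t _ => t)); [apply RC_const|apply RC_base; right; right; left; reflexivity].
    + rewrite Ew_pdx.
      apply RC_mult; [apply RC_base; right; right; right; reflexivity|].
      apply (RC_plus _ (fun _ _ => -2 * lam * x0) (fun _ x => 2 * lam * x)); [apply RC_const|].
      apply (RC_mult _ (fun _ _ => 2 * lam) (fun _ x => x)); [apply RC_const|apply RC_base; right; left; reflexivity].
Qed.

Definition supp (a0 b0 c0 d0 : R) (f : R -> R -> R) :=
  forall t x, ~ (a0 <= t <= b0 /\ c0 <= x <= d0) -> f t x = 0.

Lemma outside_cases : forall a0 b0 c0 d0 t x, ~ (a0 <= t <= b0 /\ c0 <= x <= d0) ->
  t < a0 \/ b0 < t \/ x < c0 \/ d0 < x.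
Proof.
  intros. destruct (Rlt_le_dec t a0); auto. destruct (Rlt_le_dec b0 t); auto.
  destruct (Rlt_le_dec x c0); auto. destruct (Rlt_le_dec d0 x); auto. exfalso; apply H; lra.
Qed.

Lemma Derive_zero_loc : forall (g : R -> R) y, locally y (fun z => g z = 0) -> Derive g y = 0.
Proof.
  intros. rewrite (Derive_ext_loc g (fun _ => 0)). apply Derive_const. auto.
Qed.

Lemma loc_lt : forall y a, y < a -> locally y (fun z => z < a).
Proof.
  intros y a H. assert (Hp : 0 < a - y) by lra. exists (mkposreal _ Hp). intros z Hz.
  unfold ball in Hz; simpl in Hz; unfold AbsRing_ball, abs, minus, plus, opp in Hz; simpl in Hz.
  apply Rabs_lt_between in Hz. lra.
Qed.
Lemma loc_gt : forall y a, a < y -> locally y (fun z => a < z).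
Proof.
  intros y a H. assert (Hp : 0 < y - a) by lra. exists (mkposreal _ Hp). intros z Hz.
  unfold ball in Hz; simpl in Hz; unfold AbsRing_ball, abs, minus, plus, opp in Hz; simpl in Hz.
  apply Rabs_lt_between in Hz. lra.
Qed.

Lemma supp_pdt : forall a0 b0 c0 d0 f, supp a0 b0 c0 d0 f -> supp a0 b0 c0 d0 (pdt f).
Proof.
  intros a0 b0 c0 d0 f H t x Hn. unfold pdt. apply Derive_zero_loc.
  destruct (outside_cases _ _ _ _ _ _ Hn) as [h|[h|[h|h]]].
  - generalize (loc_lt t a0 h). apply filter_imp. intros z Hz. apply H. lra.
  - generalize (loc_gt t b0 h). apply filter_imp. intros z Hz. apply H. lra.
  - apply filter_forall. intros z. apply H. lra.
  - apply filter_forall. intros z. apply H. lra.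
Qed.

Lemma supp_pdx : forall a0 b0 c0 d0 f, supp a0 b0 c0 d0 f -> supp a0 b0 c0 d0 (pdx f).
Proof.
  intros a0 b0 c0 d0 f H t x Hn. unfold pdx. apply Derive_zero_loc.
  destruct (outside_cases _ _ _ _ _ _ Hn) as [h|[h|[h|h]]].
  - apply filter_forall. intros z. apply H. lra.
  - apply filter_forall. intros z. apply H. lra.
  - generalize (loc_lt x c0 h). apply filter_imp. intros z Hz. apply H. lra.
  - generalize (loc_gt x d0 h). apply filter_imp. intros z Hz. apply H. lra.
Qed.

Lemma supp_mult_l : forall a0 b0 c0 d0 f g, supp a0 b0 c0 d0 f -> supp a0 b0 c0 d0 (fun t x => g t x * f t x).
Proof. intros. intros t x Hn. rewrite H; auto; ring. Qed.
Lemma supp_mult_r : forall a0 b0 c0 d0 f g, supp a0 b0 c0 d0 f -> supp a0 b0 c0 d0 (fun t x => f t x * g t x).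
Proof. intros. intros t x Hn. rewrite H; auto; ring. Qed.
Lemma supp_plus : forall a0 b0 c0 d0 f g, supp a0 b0 c0 d0 f -> supp a0 b0 c0 d0 g -> supp a0 b0 c0 d0 (fun t x => f t x + g t x).
Proof. intros. intros t x Hn. rewrite H, H0; auto; ring. Qed.

Lemma Dn_pdword : forall F t j x, Derive_n (fun y => F t y) j x = pdword (repeat false j) F t x.
Proof.
  intros F t j. induction j as [|j IH]; intros x; [reflexivity|].
  simpl. unfold pdx. apply Derive_ext. intros; apply IH.
Qed.

Definition useq (F : R -> R -> R) (t : R) : nat -> R -> R := fun j x => Derive_n (fun y => F t y) j x.

Lemma supp_rep : forall a0 b0 c0 d0 F j, supp a0 b0 c0 d0 F -> supp a0 b0 c0 d0 (pdword (repeat false j) F).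
Proof. intros. induction j; simpl; auto. apply supp_pdx; auto. Qed.

Lemma OK_useq : forall L a0 b0 c0 d0 F t, 0 < c0 -> d0 < L -> smooth2 F -> supp a0 b0 c0 d0 F -> OK L (useq F t).
Proof.
  intros L a0 b0 c0 d0 F t Hc Hd HF HS. split.
  - intros j x. unfold useq. simpl.
    apply Derive_correct. eapply ex_derive_ext.
    + intros y. symmetry. apply Dn_pdword.
    + apply (HF (repeat false j) t x).
  - intros j. unfold useq. rewrite !Dn_pdword. split; apply (supp_rep a0 b0 c0 d0); auto; lra.
Qed.

Definition Eop2 (x0 s : R) (f : R -> R -> R) := fun t x => pdx f t x + s * (x - x0) * f t x.
Fixpoint Eit2 (x0 s : R) (N : nat) (f : R -> R -> R) : R -> R -> R :=
  match N with O => f | S N' => Eit2 x0 s N' (Eop2 x0 s f) end.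

Lemma RC_Eop2 : forall S x0 s f, closedS S -> RC S (fun _ x => x) -> RC S f -> RC S (Eop2 x0 s f).
Proof.
  intros. unfold Eop2. apply RC_plus. apply RC_pdx; auto.
  apply (RC_mult S (fun t x => s * (x - x0)) f); auto.
  apply (RC_mult S (fun _ _ => s) (fun t x => x - x0)). apply RC_const.
  apply (RC_minus S (fun _ x => x) (fun _ _ => x0)); auto. apply RC_const.
Qed.
Lemma RC_Eit2 : forall S x0 s N f, closedS S -> RC S (fun _ x => x) -> RC S f -> RC S (Eit2 x0 s N f).
Proof. intros S x0 s N; induction N; intros; simpl; auto. apply IHN; auto. apply RC_Eop2; auto. Qed.

Lemma supp_Eop2 : forall a0 b0 c0 d0 x0 s f, supp a0 b0 c0 d0 f -> supp a0 b0 c0 d0 (Eop2 x0 s f).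
Proof. intros. unfold Eop2. apply supp_plus. apply supp_pdx; auto. apply supp_mult_l; auto. Qed.
Lemma supp_Eit2 : forall a0 b0 c0 d0 x0 s N f, supp a0 b0 c0 d0 f -> supp a0 b0 c0 d0 (Eit2 x0 s N f).
Proof. intros a0 b0 c0 d0 x0 s N; induction N; intros; simpl; auto. apply IHN, supp_Eop2; auto. Qed.

Lemma useq_Eop2 : forall x0 s F t, smooth2 F -> useq (Eop2 x0 s F) t = Esq x0 s (useq F t).
Proof.
  intros x0 s F t HF.
  assert (Hd : forall j x, is_derive (useq F t j) x (useq F t (S j) x)).
  { intros j x. unfold useq. simpl. apply Derive_correct. eapply ex_derive_ext.
    + intros y. symmetry. apply Dn_pdword.
    + apply (HF (repeat false j) t x). }
  apply functional_extensionality; intro j. induction j as [|j IH]; apply functional_extensionality; intro x.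
  - unfold useq, Esq, Eop2, pdx. simpl. ring.
  - change (useq (Eop2 x0 s F) t (S j) x) with (Derive (useq (Eop2 x0 s F) t j) x).
    rewrite IH. apply is_derive_unique.
    apply Esq_der; auto.
Qed.

Lemma useq_der : forall F t, smooth2 F -> forall j x, is_derive (useq F t j) x (useq F t (S j) x).
Proof.
  intros F t HF j x. unfold useq. simpl. apply Derive_correct. eapply ex_derive_ext.
  + intros y. symmetry. apply Dn_pdword.
  + apply (HF (repeat false j) t x).
Qed.

Lemma useq_Eit2 : forall S x0 s N F t, closedS S -> RC S (fun _ x => x) -> RC S F ->
  useq (Eit2 x0 s N F) t = EN x0 s N (useq F t).
Proof.
  intros S x0 s N. induction N as [|N IH]; intros F t HS Hx HF; [reflexivity|].
  simpl. rewrite IH; auto. rewrite useq_Eop2; auto. apply (RC_smooth S); auto.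
  apply RC_Eop2; auto.
Qed.

Lemma Eit2_val : forall S x0 s N F t x, closedS S -> RC S (fun _ x => x) -> RC S F ->
  Eit2 x0 s N F t x = EN x0 s N (useq F t) 0%nat x.
Proof.
  intros. rewrite <- (useq_Eit2 S x0 s N F t); auto.
Qed.

Lemma RC_sum : forall SS (f : nat -> R -> R -> R) M, (forall q, RC SS (f q)) ->
  RC SS (fun t x => sum_f_R0 (fun q => f q t x) M).
Proof.
  intros SS f M H. induction M; simpl.
  - apply H.
  - apply (RC_plus SS (fun t x => sum_f_R0 (fun q => f q t x) M) (f (S M))); auto.
Qed.

Lemma RC_Bf : forall S N m s x0, RC S (fun _ x => x) -> RC S (fun _ x => Bf N m s x0 x).
Proof.
  intros. unfold Bf, Pa.
  apply (RC_sum S (fun q t x => gam N m q * (s * (x - x0)) ^ (2 * (N - m - q)) * s ^ q)).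
  intros q. apply (RC_mult S (fun t x => gam N m q * (s * (x - x0)) ^ (2 * (N - m - q))) (fun _ _ => s ^ q)); [|apply RC_const].
  apply (RC_mult S (fun _ _ => gam N m q)); [apply RC_const|].
  apply (RC_pow S (fun t x => s * (x - x0))).
  apply (RC_mult S (fun _ _ => s)); [apply RC_const|].
  apply (RC_minus S (fun _ x => x) (fun _ _ => x0)); auto. apply RC_const.
Qed.

Lemma pdt_pdx : forall F, smooth2 F -> pdt (pdx F) = pdx (pdt F).
Proof.
  intros F HF. apply funext2. intros t x. unfold pdt, pdx.
  apply Schwarz.
  - exists (mkposreal 1 Rlt_0_1). intros u v _ _.
    split; [|split; [|split]].
    + apply (HF nil u v).
    + apply (HF nil u v).
    + apply (HF (false :: nil) u v).
    + apply (HF (true :: nil) u v).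
  - apply continuity_2d_pt_filterlim. apply (HF (true :: false :: nil) t x).
  - apply continuity_2d_pt_filterlim. apply (HF (false :: true :: nil) t x).
Qed.

Lemma pdt_Eop2 : forall x0 s F, smooth2 F -> pdt (Eop2 x0 s F) = Eop2 x0 s (pdt F).
Proof.
  intros x0 s F HF. unfold Eop2. rewrite <- (pdt_pdx F HF). apply funext2. intros t x.
  unfold pdt. rewrite (Derive_plus (fun z => pdx F z x) (fun z => s * (x - x0) * F z x)).
  - rewrite Derive_scal. reflexivity.
  - apply (HF (false :: nil) t x).
  - apply ex_derive_scal. apply (HF nil t x).
Qed.

Lemma pdt_Eit2 : forall S x0 s N F, closedS S -> RC S (fun _ x => x) -> RC S F ->
  pdt (Eit2 x0 s N F) = Eit2 x0 s N (pdt F).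
Proof.
  intros S x0 s N. induction N as [|N IH]; intros F HS Hx HF; [reflexivity|].
  simpl. rewrite IH; auto. rewrite pdt_Eop2; auto. apply (RC_smooth S); auto. apply RC_Eop2; auto.
Qed.

Lemma pint_der : forall S L g t, closedS S -> 0 <= L -> RC S g ->
  is_derive (fun t => RInt (fun x => g t x) 0 L) t (RInt (fun x => pdt g t x) 0 L).
Proof.
  intros S L g t HS HL Hg.
  assert (Pg := RC_P2 S HS g Hg). assert (Pg' := RC_P2 S HS (pdt g) (RC_pdt S HS g Hg)).
  apply (is_derive_RInt_param g 0 L t).
  - apply filter_forall. intros t' x _. apply Pg.
  - intros x _. apply Pg'.
  - apply filter_forall. intros y. apply exR. intros x. apply (@ex_derive_continuous R_AbsRing R_NormedModule). apply Pg.
Qed.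

Lemma pint_cont : forall S L g t, closedS S -> 0 <= L -> RC S g ->
  continuous (fun t => RInt (fun x => g t x) 0 L) t.
Proof.
  intros. apply (@ex_derive_continuous R_AbsRing R_NormedModule). eexists. apply (pint_der S); auto.
Qed.

Lemma ex_pint : forall S L T g, closedS S -> 0 <= L -> RC S g ->
  ex_RInt (fun t => RInt (fun x => g t x) 0 L) 0 T.
Proof. intros. apply exR. intros. apply (pint_cont S); auto. Qed.

Lemma ex_inner : forall S L g t, closedS S -> RC S g -> ex_RInt (fun x => g t x) 0 L.
Proof.
  intros. apply exR. intros x. apply (@ex_derive_continuous R_AbsRing R_NormedModule). apply (RC_P2 S H g H0).
Qed.

Lemma ftc_gen : forall (G dG : R -> R) T, (forall t, is_derive G t (dG t)) -> (forall t, continuous dG t) ->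
  RInt dG 0 T = G T - G 0.
Proof.
  intros G dG T Hd Hc.
  assert (H := is_RInt_derive G dG 0 T (fun x _ => Hd x) (fun x _ => Hc x)).
  apply is_RInt_unique in H. rewrite H. unfold minus, plus, opp; simpl; ring.
Qed.

Lemma DN : forall x0 c (e : R -> R) u N y,
  (forall y, is_derive e y (- (c * (y - x0)) * e y)) -> (forall j y, is_derive (u j) y (u (S j) y)) ->
  Derive_n (fun z => e z * u 0%nat z) N y = e y * EN x0 (- c) N u 0%nat y.
Proof.
  intros x0 c e u N. revert u. induction N as [|N IH]; intros u y He Hu; [reflexivity|].
  replace (S N) with (N + 1)%nat by lia. rewrite <- Derive_n_comp.
  rewrite (Derive_n_ext (Derive_n (fun z => e z * u 0%nat z) 1) (fun z => e z * Esq x0 (-c) u 0%nat z)).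
  - rewrite IH; [|auto|apply Esq_der; auto]. replace (N + 1)%nat with (S N) by lia. reflexivity.
  - intros z. simpl. apply is_derive_unique.
    evar (l : R). replace (e z * Esq x0 (- c) u 0 z) with l.
    + apply (is_derive_mult e (u 0%nat)); auto. intros; apply Rmult_comm.
    + subst l. unfold Esq. simpl. unfold plus, mult; simpl. ring.
Qed.

Definition wf lam x0 t0 beta (v : R -> R -> R) := fun t x => Ew lam x0 t0 beta t x * v t x.

Lemma RC_x : forall lam x0 t0 beta v, RC (S0 lam x0 t0 beta v) (fun _ x => x).
Proof. intros. apply RC_base. right; left; reflexivity. Qed.
Lemma RC_w : forall lam x0 t0 beta v, RC (S0 lam x0 t0 beta v) (wf lam x0 t0 beta v).
Proof.
  intros. unfold wf. apply RC_mult; apply RC_base. right; right; right; reflexivity.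
  left. exists nil. reflexivity.
Qed.

Lemma cont_x : forall S F t x, closedS S -> RC S F -> continuous (fun y => F t y) x.
Proof. intros. apply (@ex_derive_continuous R_AbsRing R_NormedModule). apply (RC_P2 S H F H0). Qed.

Lemma RInt_sub : forall (f g : R -> R) a b, ex_RInt f a b -> ex_RInt g a b ->
  RInt (fun x => f x - g x) a b = RInt f a b - RInt g a b.
Proof. intros. apply (RInt_minus f g); auto. Qed.

Lemma isR_scal : forall (f : R -> R) a b k I, is_RInt f a b I -> is_RInt (fun y => k * f y) a b (k * I).
Proof. intros. apply (is_RInt_scal f a b k I); auto. Qed.
Lemma isR_plus : forall (f g : R -> R) a b I J, is_RInt f a b I -> is_RInt g a b J ->
  is_RInt (fun y => f y + g y) a b (I + J).
Proof. intros. apply (is_RInt_plus f g a b I J); auto. Qed.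
Lemma isR_minus : forall (f g : R -> R) a b I J, is_RInt f a b I -> is_RInt g a b J ->
  is_RInt (fun y => f y - g y) a b (I - J).
Proof. intros. apply (is_RInt_minus f g a b I J); auto. Qed.
Lemma isR_RInt : forall (f : R -> R) a b, ex_RInt f a b -> is_RInt f a b (RInt f a b).
Proof. intros. apply (RInt_correct f a b); auto. Qed.
Ltac lin := repeat match goal with
  | |- is_RInt (fun y => _ + _) _ _ (_ + _) => apply isR_plus
  | |- is_RInt (fun y => _ - _) _ _ (_ - _) => apply isR_minus
  | |- is_RInt (fun y => _ * _) _ _ (_ * RInt _ _ _) => apply isR_scal
  | |- is_RInt _ _ _ (RInt _ _ _) => apply isR_RInt; apply exR; intros; ct
  end.
Ltac toR := match goal with |- @eq _ ?a ?b => change (@eq R a b) end.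

Lemma per_t : forall L x0 t0 beta lam alpha n v a0 b0 c0 d0 t p,
  0 < L -> 0 < c0 -> d0 < L -> smooth2 v -> supp a0 b0 c0 d0 v ->
  RInt (fun x =>
      ((Eit2 x0 (-(2*lam)) n (wf lam x0 t0 beta v) t x) ^ 2 - (Eit2 x0 (2*lam) n (wf lam x0 t0 beta v) t x) ^ 2) / 2
    + alpha * (Eit2 x0 (-(2*lam)) n (wf lam x0 t0 beta v) t x + (-1) ^ n * Eit2 x0 (2*lam) n (wf lam x0 t0 beta v) t x)
        * pdt (wf lam x0 t0 beta v) t x
    - alpha * p * wf lam x0 t0 beta v t x
        * (Eit2 x0 (-(2*lam)) n (wf lam x0 t0 beta v) t x - (-1) ^ n * Eit2 x0 (2*lam) n (wf lam x0 t0 beta v) t x)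
    - 2 * alpha ^ 2 * p * wf lam x0 t0 beta v t x * pdt (wf lam x0 t0 beta v) t x) 0 L
  = 1/2 * sum_f_R0 (fun m => RInt (fun x => (Bf n m (-(2*lam)) x0 x - Bf n m (2*lam) x0 x)
                      * (useq (wf lam x0 t0 beta v) t m x) ^ 2) 0 L) n
    + alpha * RInt (fun x => pdt (fun t x => wf lam x0 t0 beta v t x * Eit2 x0 (-(2*lam)) n (wf lam x0 t0 beta v) t x) t x) 0 L
    - alpha ^ 2 * p * RInt (fun x => pdt (fun t x => wf lam x0 t0 beta v t x * wf lam x0 t0 beta v t x) t x) 0 L.
Proof.
  intros L x0 t0 beta lam alpha n v a0 b0 c0 d0 t p HL Hc0 Hd0 Hv Hsv.
  set (SS := S0 lam x0 t0 beta v).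
  assert (HS : closedS SS) by (apply S0_closed; auto).
  assert (Hx : RC SS (fun _ x => x)) by apply RC_x.
  set (w := wf lam x0 t0 beta v).
  assert (Hw : RC SS w) by apply RC_w.
  assert (Sw : supp a0 b0 c0 d0 w) by (apply supp_mult_l; auto).
  set (c := 2 * lam).
  set (X := Eit2 x0 (-c) n w). set (Z := Eit2 x0 c n w). set (wt := pdt w).
  assert (HX : RC SS X) by (apply RC_Eit2; auto).
  assert (HZ : RC SS Z) by (apply RC_Eit2; auto).
  assert (Hwt : RC SS wt) by (apply RC_pdt; auto).
  assert (Swt : supp a0 b0 c0 d0 wt) by (apply supp_pdt; auto).
  assert (cX : forall x, continuous (fun y => X t y) x) by (intros; apply (cont_x SS); auto).
  assert (cZ : forall x, continuous (fun y => Z t y) x) by (intros; apply (cont_x SS); auto).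
  assert (cw : forall x, continuous (fun y => w t y) x) by (intros; apply (cont_x SS); auto).
  assert (cwt : forall x, continuous (fun y => wt t y) x) by (intros; apply (cont_x SS); auto).
  set (u := useq w t). set (ut := useq wt t).
  assert (Ou : OK L u) by (apply (OK_useq L a0 b0 c0 d0); auto; apply (RC_smooth SS); auto).
  assert (Out : OK L ut) by (apply (OK_useq L a0 b0 c0 d0); auto; apply (RC_smooth SS); auto).
  assert (EX : forall x, X t x = EN x0 (-c) n u 0%nat x) by (intros; apply (Eit2_val SS); auto).
  assert (EZ : forall x, Z t x = EN x0 c n u 0%nat x) by (intros; apply (Eit2_val SS); auto).
  assert (Ew0 : forall x, w t x = u 0%nat x) by reflexivity.
  assert (Ewt0 : forall x, wt t x = ut 0%nat x) by reflexivity.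
  assert (IX2 : RInt (fun x => X t x ^ 2) 0 L = sum_f_R0 (fun m => RInt (fun x => Bf n m (-c) x0 x * (u m x) ^ 2) 0 L) n).
  { rewrite <- QF; auto; [|lra]. apply RInt_ext_R. intros; rewrite EX; auto. }
  assert (IZ2 : RInt (fun x => Z t x ^ 2) 0 L = sum_f_R0 (fun m => RInt (fun x => Bf n m c x0 x * (u m x) ^ 2) 0 L) n).
  { rewrite <- QF; auto; [|lra]. apply RInt_ext_R. intros; rewrite EZ; auto. }
  assert (IwX : RInt (fun x => w t x * X t x) 0 L = (-1) ^ n * RInt (fun x => w t x * Z t x) 0 L).
  { rewrite (RInt_ext_R _ (fun x => u 0%nat x * EN x0 (-c) n u 0%nat x)) by (intros; rewrite EX; auto).
    rewrite ADJ; auto; [|lra]. rewrite Ropp_involutive. f_equal. apply RInt_ext_R. intros; rewrite EZ, Ew0; ring. }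
  assert (Hder : forall x, pdt (fun t x => w t x * X t x) t x = wt t x * X t x + w t x * Eit2 x0 (-c) n wt t x).
  { intros x. unfold pdt. rewrite (Derive_mult (fun s => w s x) (fun s => X s x)).
    - change (Derive (fun s => X s x) t) with (pdt X t x). unfold X. rewrite (pdt_Eit2 SS); auto.
    - apply (proj1 (RC_P2 SS HS w Hw t x)).
    - apply (proj1 (RC_P2 SS HS X HX t x)). }
  assert (IH' : RInt (fun x => pdt (fun t x => w t x * X t x) t x) 0 L
             = RInt (fun x => X t x * wt t x) 0 L + (-1) ^ n * RInt (fun x => Z t x * wt t x) 0 L).
  { rewrite (RInt_ext_R _ (fun x => X t x * wt t x + u 0%nat x * EN x0 (-c) n ut 0%nat x)).
    - rewrite RInt_add; [|apply exR; intros; ct|].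
      + rewrite ADJ; auto; [|lra]. rewrite Ropp_involutive. f_equal. f_equal. apply RInt_ext_R. intros; rewrite EZ; auto.
      + apply (ex_RInt_ext (fun x => w t x * Eit2 x0 (-c) n wt t x)).
        * intros. rewrite Ew0, (Eit2_val SS); auto.
        * apply exR. intros. apply cont_mult; auto. apply (cont_x SS); auto. apply RC_Eit2; auto.
    - intros x. rewrite Hder, (Eit2_val SS x0 (-c) n wt); auto. rewrite Ew0. fold ut. ring. }
  assert (IK' : RInt (fun x => pdt (fun t x => w t x * w t x) t x) 0 L = 2 * RInt (fun x => w t x * wt t x) 0 L).
  { rewrite <- RInt_scalR by (apply exR; intros; ct). apply RInt_ext_R. intros x. unfold pdt.
    rewrite (Derive_mult (fun s => w s x) (fun s => w s x)); try apply (proj1 (RC_P2 SS HS w Hw t x)). fold (pdt w t x). fold wt. ring. }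
  rewrite IH', IK'.
  assert (Hsum : sum_f_R0 (fun m => RInt (fun x => (Bf n m (-c) x0 x - Bf n m c x0 x) * (u m x) ^ 2) 0 L) n
     = sum_f_R0 (fun m => RInt (fun x => Bf n m (-c) x0 x * (u m x) ^ 2) 0 L) n
       - sum_f_R0 (fun m => RInt (fun x => Bf n m c x0 x * (u m x) ^ 2) 0 L) n).
  { rewrite <- minus_sum. apply sum_eq. intros m _.
    assert (cu : forall j x, continuous (u j) x) by (intros j x; apply (cont_der _ _ _ (proj1 Ou j))).
    assert (cB : forall N m s x, continuous (Bf N m s x0) x) by (intros; apply (cont_der _ _ _ (Bf_der _ _ _ _))).
    rewrite <- RInt_sub by (apply exR; intros; ct). apply RInt_ext_R. intros; ring. }
  rewrite Hsum, <- IX2, <- IZ2.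
  rewrite (RInt_ext_R _ (fun x =>
     (1/2) * (X t x ^ 2) - (1/2) * (Z t x ^ 2) + alpha * (X t x * wt t x) + (alpha * (-1) ^ n) * (Z t x * wt t x)
     - (alpha * p) * (w t x * X t x) + (alpha * p * (-1) ^ n) * (w t x * Z t x) - (2 * alpha ^ 2 * p) * (w t x * wt t x))).
  2:{ intros. field. }
  transitivity ((1/2) * RInt (fun x => X t x ^ 2) 0 L - (1/2) * RInt (fun x => Z t x ^ 2) 0 L
     + alpha * RInt (fun x => X t x * wt t x) 0 L + (alpha * (-1) ^ n) * RInt (fun x => Z t x * wt t x) 0 L
     - (alpha * p) * RInt (fun x => w t x * X t x) 0 L + (alpha * p * (-1) ^ n) * RInt (fun x => w t x * Z t x) 0 L
     - (2 * alpha ^ 2 * p) * RInt (fun x => w t x * wt t x) 0 L).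
  { apply is_RInt_unique.
    lin. }
  rewrite IwX. toR. ring.
Qed.

Lemma PQ : forall X Z wt w p alpha sg, sg ^ 2 = 1 ->
  (X ^ 2 - Z ^ 2) / 2 + alpha * (X + sg * Z) * wt - alpha * p * w * (X - sg * Z) - 2 * alpha ^ 2 * p * w * wt
  <= (alpha * (wt - p * w) + X) ^ 2.
Proof.
  intros. set (S := (X + sg * Z) / 2 - alpha * p * w). set (A := alpha * wt + (X - sg * Z) / 2).
  assert (E : (alpha * (wt - p * w) + X) ^ 2 - ((X ^ 2 - Z ^ 2) / 2 + alpha * (X + sg * Z) * wt
     - alpha * p * w * (X - sg * Z) - 2 * alpha ^ 2 * p * w * wt) = S ^ 2 + A ^ 2 + (1 - sg ^ 2) * Z ^ 2 / 2).
  { unfold S, A. field. }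
  rewrite H in E. assert (0 <= S ^ 2) by apply pow2_ge_0. assert (0 <= A ^ 2) by apply pow2_ge_0. lra.
Qed.

Lemma sg2 : forall n, ((-1) ^ n) ^ 2 = 1.
Proof. intros. rewrite <- pow_mult. rewrite Nat.mul_comm, pow_mult. simpl. replace (-1 * (-1 * 1)) with 1 by ring. apply pow1. Qed.

Lemma Bf_nn : forall n s x0 x, Bf n n s x0 x = 1.
Proof.
  intros. unfold Bf, Pa. destruct n as [|n].
  - simpl. ring.
  - rewrite sum_shift1. rewrite gam_q0. unfold Cz. rewrite Nat.leb_refl, C_nn.
    rewrite sum_zero. replace (S n - S n - 0)%nat with 0%nat by lia. simpl. ring.
    intros q _. rewrite gam_zero by lia. ring.
Qed.

Lemma ex_RInt_sum : forall (f : nat -> R -> R) a b N, (forall m, ex_RInt (f m) a b) ->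
  ex_RInt (fun t => sum_f_R0 (fun m => f m t) N) a b.
Proof.
  intros f a b N H. induction N; simpl. apply H.
  apply (ex_RInt_plus (fun t => sum_f_R0 (fun m => f m t) N) (f (S N))); auto.
Qed.

Lemma RInt_sum : forall (f : nat -> R -> R) a b N, (forall m, ex_RInt (f m) a b) ->
  RInt (fun t => sum_f_R0 (fun m => f m t) N) a b = sum_f_R0 (fun m => RInt (f m) a b) N.
Proof.
  intros f a b N H. induction N; simpl. reflexivity.
  rewrite (RInt_add (fun t => sum_f_R0 (fun m => f m t) N) (f (S N))); auto.
  rewrite IHN; auto. apply ex_RInt_sum; auto.
Qed.

Lemma RInt_zero : forall (f : R -> R) a b, (forall x, f x = 0) -> RInt f a b = 0.
Proof.
  intros. rewrite (RInt_ext_R _ (fun _ => 0)) by auto. rewrite RInt_const. unfold scal; simpl; unfold mult; simpl; ring.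
Qed.

Lemma PW : forall x0 t0 beta lam alpha n v t x, smooth2 v ->
  exp (2 * lam * psi x0 t0 beta t x) * (alpha * pdt v t x + pdxn n v t x) ^ 2
  = (alpha * (pdt (wf lam x0 t0 beta v) t x - (2 * lam * beta * t0 + -2 * lam * beta * t) * wf lam x0 t0 beta v t x)
     + Eit2 x0 (-(2 * lam)) n (wf lam x0 t0 beta v) t x) ^ 2.
Proof.
  intros x0 t0 beta lam alpha n v t x Hv.
  set (SS := S0 lam x0 t0 beta v).
  assert (HS : closedS SS) by (apply S0_closed; auto).
  set (w := wf lam x0 t0 beta v).
  assert (Hw : RC SS w) by apply RC_w.
  set (E := Ew lam x0 t0 beta t x).
  assert (Ha : pdt w t x = E * (2 * lam * beta * t0 + -2 * lam * beta * t) * v t x + E * pdt v t x).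
  { unfold pdt, w, wf. rewrite (Derive_mult (fun s => Ew lam x0 t0 beta s x) (fun s => v s x)).
    - change (Derive (fun s => Ew lam x0 t0 beta s x) t) with (pdt (Ew lam x0 t0 beta) t x).
      rewrite Ew_pdt. reflexivity.
    - apply (Ew_P2 lam x0 t0 beta t x).
    - apply (Hv nil t x). }
  set (e := fun z => exp (- (lam * psi x0 t0 beta t z))).
  assert (He : forall y, is_derive e y (- (2 * lam * (y - x0)) * e y)).
  { intros y. unfold e, psi. auto_derive; auto.
    match goal with |- context [exp ?A] => replace (exp A) with (exp (- (lam * ((y - x0) ^ 2 - beta * (t - t0) ^ 2)))) by (f_equal; ring) end.
    ring. }
  assert (Hb : E * pdxn n v t x = Eit2 x0 (-(2 * lam)) n w t x).
  { rewrite (Eit2_val SS); auto; [|apply RC_x].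
    unfold pdxn. rewrite (Derive_n_ext (fun y => v t y) (fun z => e z * useq w t 0%nat z)).
    - rewrite (DN x0 (2 * lam) e); auto.
      + unfold E, e, Ew. rewrite <- Rmult_assoc, <- exp_plus, Rplus_opp_r, exp_0. ring.
      + apply useq_der. apply (RC_smooth SS); auto.
    - intros z. unfold useq, w, wf, e, Ew. simpl. rewrite <- Rmult_assoc, <- exp_plus, Rplus_opp_l, exp_0. ring. }
  assert (Hc : exp (2 * lam * psi x0 t0 beta t x) = E ^ 2).
  { unfold E, Ew. simpl. rewrite Rmult_1_r, <- exp_plus. f_equal. ring. }
  rewrite Hc, Ha, <- Hb. unfold w, wf. fold E. ring.
Qed.

Lemma RC_div : forall S f c, RC S f -> RC S (fun t x => f t x / c).
Proof. intros. unfold Rdiv. apply (RC_mult S f (fun _ _ => / c)); auto. apply RC_const. Qed.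

Ltac rc := repeat match goal with
 | |- RC _ (fun t x => _ / _) => apply RC_div
 | |- RC _ (fun t x => _ * _) => apply RC_mult
 | |- RC _ (fun t x => _ + _) => apply RC_plus
 | |- RC _ (fun t x => _ - _) => apply RC_minus
 | |- RC _ (fun t x => _ ^ _) => apply RC_pow
 | |- RC _ (fun t x => ?c) => apply RC_const
 | |- RC _ (fun t x => Bf _ _ _ _ x) => apply RC_Bf; auto
 | |- _ => solve [auto]
 end.

Lemma sum_if0 : forall (a b : nat -> R) k N,
  sum_f_R0 (fun m => a m - (if (m =? 0)%nat then k * b m else 0)) N = sum_f_R0 a N - k * b 0%nat.
Proof. intros. induction N; simpl. ring. rewrite IHN. ring. Qed.

Lemma MAIN : forall T L alpha n x0 t0 beta lam v a0 b0 c0 d0,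
  0 < T -> 0 < L -> (1 <= n)%nat -> 0 < a0 -> b0 < T -> 0 < c0 -> d0 < L -> smooth2 v -> supp a0 b0 c0 d0 v ->
  sum_f_R0 (fun m => dint T L (fun t x =>
      (1/2 * (Bf n m (-(2*lam)) x0 x - Bf n m (2*lam) x0 x) - (if (m =? 0)%nat then 2*alpha^2*lam*beta else 0))
      * (pdxn m (fun t x => exp (lam * psi x0 t0 beta t x) * v t x) t x) ^ 2)) (n - 1)
  <= dint T L (fun t x => exp (2 * lam * psi x0 t0 beta t x) * (alpha * pdt v t x + pdxn n v t x) ^ 2).
Proof.
  intros T L alpha n x0 t0 beta lam v a0 b0 c0 d0 HT HL Hn Ha0 Hb0 Hc0 Hd0 Hv Hsv.
  set (SS := S0 lam x0 t0 beta v).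
  assert (HS : closedS SS) by (apply S0_closed; auto).
  assert (Hx : RC SS (fun _ x => x)) by apply RC_x.
  assert (Ht : RC SS (fun t _ => t)) by (apply RC_base; right; right; left; reflexivity).
  set (w := wf lam x0 t0 beta v).
  assert (Hw : RC SS w) by apply RC_w.
  assert (Sw : supp a0 b0 c0 d0 w) by (apply supp_mult_l; auto).
  set (X := Eit2 x0 (-(2*lam)) n w). set (Z := Eit2 x0 (2*lam) n w). set (wt := pdt w).
  assert (HX : RC SS X) by (apply RC_Eit2; auto).
  assert (HZ : RC SS Z) by (apply RC_Eit2; auto).
  assert (Hwt : RC SS wt) by (apply RC_pdt; auto).
  set (pht := fun t : R => 2 * lam * beta * t0 + -2 * lam * beta * t).
  set (sg := (-1) ^ n).
  set (Pf := fun t x => (alpha * (wt t x - pht t * w t x) + X t x) ^ 2).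
  set (Qf := fun t x => (X t x ^ 2 - Z t x ^ 2) / 2 + alpha * (X t x + sg * Z t x) * wt t x
       - alpha * pht t * w t x * (X t x - sg * Z t x) - 2 * alpha ^ 2 * pht t * w t x * wt t x).
  assert (HP : RC SS Pf) by (unfold Pf, pht; cbv beta; rc).
  assert (HQ : RC SS Qf) by (unfold Qf, pht, sg; cbv beta; rc).
  assert (E1 : dint T L (fun t x => exp (2 * lam * psi x0 t0 beta t x) * (alpha * pdt v t x + pdxn n v t x) ^ 2)
               = RInt (fun t => RInt (fun x => Pf t x) 0 L) 0 T).
  { unfold dint. apply RInt_ext_R. intros t. apply RInt_ext_R. intros x. unfold Pf. apply PW; auto. }
  rewrite E1. clear E1.
  assert (E2 : RInt (fun t => RInt (fun x => Qf t x) 0 L) 0 T <= RInt (fun t => RInt (fun x => Pf t x) 0 L) 0 T).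
  { apply RInt_le; [lra| apply (ex_pint SS); auto; lra | apply (ex_pint SS); auto; lra |].
    intros t _. apply RInt_le; [lra| apply (ex_inner SS); auto | apply (ex_inner SS); auto|].
    intros x _. unfold Qf, Pf. apply PQ. apply sg2. }
  eapply Rle_trans; [|exact E2]. clear E2.
  set (c := 2 * lam).
  set (D := fun m x => Bf n m (-c) x0 x - Bf n m c x0 x).
  set (Jm := fun m t => RInt (fun x => D m x * (useq w t m x) ^ 2) 0 L).
  set (Um := fun m t => RInt (fun x => (useq w t m x) ^ 2) 0 L).
  set (g := fun t x => w t x * X t x).
  set (h := fun t x => w t x * w t x).
  set (Hd := fun t => RInt (fun x => pdt g t x) 0 L).
  set (Kd := fun t => RInt (fun x => pdt h t x) 0 L).
  set (Kf := fun t => RInt (fun x => h t x) 0 L).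
  assert (Hg : RC SS g) by (unfold g; rc).
  assert (Hh : RC SS h) by (unfold h; rc).
  assert (E3 : forall t, RInt (fun x => Qf t x) 0 L = 1/2 * sum_f_R0 (fun m => Jm m t) n + alpha * Hd t - alpha ^ 2 * pht t * Kd t).
  { intros t. unfold Qf, Jm, Hd, Kd, D, g, h. apply (per_t L x0 t0 beta lam alpha n v a0 b0 c0 d0 t (pht t)); auto. }
  rewrite (RInt_ext_R _ _ 0 T E3). clear E3.
  assert (Hrep : forall m t x, useq w t m x = pdword (repeat false m) w t x) by (intros; apply Dn_pdword).
  assert (HD : forall m, RC SS (fun _ x => D m x)) by (intros; unfold D; rc).
  assert (exJ : forall m, ex_RInt (Jm m) 0 T).
  { intros m. apply (ex_RInt_ext (fun t => RInt (fun x => (fun t x => D m x * (pdword (repeat false m) w t x) ^ 2) t x) 0 L)).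
    - intros t _. apply RInt_ext_R. intros x. rewrite Hrep. reflexivity.
    - apply (ex_pint SS); auto; [lra|]. apply (RC_mult SS (fun _ x => D m x)); auto. apply RC_pow. apply (RC_pdword SS); auto. }
  assert (exU : forall m, ex_RInt (Um m) 0 T).
  { intros m. apply (ex_RInt_ext (fun t => RInt (fun x => (fun t x => (pdword (repeat false m) w t x) ^ 2) t x) 0 L)).
    - intros t _. apply RInt_ext_R. intros x. rewrite Hrep. reflexivity.
    - apply (ex_pint SS); auto; [lra|]. apply RC_pow. apply (RC_pdword SS); auto. }
  assert (exH : ex_RInt Hd 0 T) by (apply (ex_pint SS); auto; [lra|apply RC_pdt; auto]).
  assert (cK : forall t, continuous Kf t) by (intros; apply (pint_cont SS); auto; lra).
  assert (cKd : forall t, continuous Kd t) by (intros; apply (pint_cont SS); auto; [lra|apply RC_pdt; auto]).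
  assert (cpht : forall t, continuous pht t).
  { intros; unfold pht. apply (cont_plus (fun _ => _) (fun y => -2 * lam * beta * y)); [apply cont_const|].
    apply (cont_mult (fun _ => -2 * lam * beta) (fun y => y)); [apply cont_const|apply cont_id]. }
  assert (exPK : ex_RInt (fun t => pht t * Kd t) 0 T) by (apply exR; intros; ct).
  assert (exK : ex_RInt Kf 0 T) by (apply exR; intros; ct).
  assert (IH0 : RInt Hd 0 T = 0).
  { rewrite (ftc_gen (fun t => RInt (fun x => g t x) 0 L) Hd T).
    - rewrite !RInt_zero; [toR; ring| |]; intros x; unfold g; rewrite Sw; try ring; intros [h1 _]; lra.
    - intros t. apply (pint_der SS); auto; lra.
    - intros t. apply (pint_cont SS); auto; [lra|apply RC_pdt; auto]. }
  assert (IK0 : RInt (fun t => pht t * Kd t) 0 T = 2 * lam * beta * RInt Kf 0 T).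
  { assert (F0 : RInt (fun t => -2 * lam * beta * Kf t + pht t * Kd t) 0 T = 0).
    { rewrite (ftc_gen (fun t => pht t * Kf t) (fun t => -2 * lam * beta * Kf t + pht t * Kd t) T).
      - unfold Kf. rewrite !RInt_zero; [toR; ring| |]; intros x; unfold h; rewrite Sw; try ring; intros [h1 _]; lra.
      - intros t. evar (l : R). replace (-2 * lam * beta * Kf t + pht t * Kd t) with l.
        + apply (is_derive_mult pht Kf).
          * unfold pht. auto_derive; auto.
          * apply (pint_der SS); auto; lra.
          * intros; apply Rmult_comm.
        + subst l. unfold plus, mult; simpl. unfold pht. fold (Kd t). ring.
      - intros; ct. }
    rewrite RInt_add in F0 by (auto; apply exR; intros; ct).
    rewrite RInt_scalR in F0 by auto. lra. }
  assert (ER : RInt (fun t => 1/2 * sum_f_R0 (fun m => Jm m t) n + alpha * Hd t - alpha ^ 2 * pht t * Kd t) 0 T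
      = 1/2 * sum_f_R0 (fun m => RInt (Jm m) 0 T) n - alpha ^ 2 * (2 * lam * beta * RInt Kf 0 T)).
  { rewrite <- IK0. rewrite <- RInt_sum by auto.
    transitivity (1/2 * RInt (fun t => sum_f_R0 (fun m => Jm m t) n) 0 T + alpha * RInt Hd 0 T
                  - alpha ^ 2 * RInt (fun t => pht t * Kd t) 0 T).
    - apply is_RInt_unique.
      apply (is_RInt_ext (fun t => 1/2 * sum_f_R0 (fun m => Jm m t) n + alpha * Hd t - alpha ^ 2 * (pht t * Kd t))).
      { intros; toR; ring. }
      apply isR_minus; [apply isR_plus|]; apply isR_scal; apply isR_RInt; auto. apply ex_RInt_sum; auto.
    - rewrite IH0. toR. ring. }
  rewrite ER.
  set (k := 2 * alpha ^ 2 * lam * beta).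
  assert (cu : forall m t x, continuous (useq w t m) x).
  { intros m t x. apply (cont_der _ _ _ (useq_der w t (RC_smooth SS HS w Hw) m)). }
  assert (cD : forall m x, continuous (D m) x).
  { intros m x. unfold D. apply cont_minus; apply (cont_der _ _ _ (Bf_der _ _ _ _)). }
  assert (EL : forall m, dint T L (fun t x =>
      (1/2 * (Bf n m (-(2*lam)) x0 x - Bf n m (2*lam) x0 x) - (if (m =? 0)%nat then 2*alpha^2*lam*beta else 0))
      * (pdxn m (fun t x => exp (lam * psi x0 t0 beta t x) * v t x) t x) ^ 2)
      = 1/2 * RInt (Jm m) 0 T - (if (m =? 0)%nat then k * RInt (Um m) 0 T else 0)).
  { intros m. unfold dint. set (e := if (m =? 0)%nat then k else 0).
    transitivity (RInt (fun t => 1/2 * Jm m t - e * Um m t) 0 T).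
    - apply RInt_ext_R; intros t. unfold Jm, Um. apply is_RInt_unique.
      apply (is_RInt_ext (fun x => 1/2 * (D m x * (useq w t m x) ^ 2) - e * ((useq w t m x) ^ 2))).
      { intros x _. replace (pdxn m _ t x) with (useq w t m x) by reflexivity. unfold e, k, D, c. toR. ring. }
      apply isR_minus; apply isR_scal; apply isR_RInt; apply exR; intros; ct.
    - transitivity (1/2 * RInt (Jm m) 0 T - e * RInt (Um m) 0 T).
      + apply is_RInt_unique. apply isR_minus; apply isR_scal; apply isR_RInt; auto.
      + unfold e. destruct (m =? 0)%nat; toR; ring. }
  rewrite (sum_eq _ (fun m => 1/2 * RInt (Jm m) 0 T - (if (m =? 0)%nat then k * RInt (Um m) 0 T else 0)) (n - 1)) by (intros m _; apply EL).
  rewrite (sum_if0 (fun m => 1/2 * RInt (Jm m) 0 T) (fun m => RInt (Um m) 0 T)).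
  assert (EU : RInt (Um 0%nat) 0 T = RInt Kf 0 T).
  { apply RInt_ext_R. intros t. unfold Um, Kf. apply RInt_ext_R. intros x. unfold h. change (useq w t 0%nat x) with (w t x). ring. }
  assert (EJ : RInt (Jm n) 0 T = 0).
  { apply RInt_zero. intros t. unfold Jm. apply RInt_zero. intros x. unfold D. rewrite !Bf_nn. ring. }
  rewrite EU.
  destruct n as [|n']; [lia|]. replace (S n' - 1)%nat with n' by lia.
  simpl (sum_f_R0 (fun m => RInt (Jm m) 0 T) (S n')). rewrite EJ.
  assert (SL : forall N, sum_f_R0 (fun m => 1/2 * RInt (Jm m) 0 T) N = 1/2 * sum_f_R0 (fun m => RInt (Jm m) 0 T) N).
  { intros N; induction N; simpl; [ring|rewrite IHN; ring]. }
  rewrite SL. unfold k. right. toR. ring.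
Qed.

Definition mainT (n m : nat) (x0 x lam : R) :=
  INR n ^ 2 * Binomial.C (n - 1) m * lam ^ (2 * n - 2 * m - 1) * psi_x x0 x ^ (2 * n - 2 * m - 2) * psi_xx.

Definition coefT (n m : nat) (x0 alpha beta x lam : R) :=
  1/2 * (Bf n m (-(2*lam)) x0 x - Bf n m (2*lam) x0 x) - (if (m =? 0)%nat then 2*alpha^2*lam*beta else 0).

Definition Tq (n m q : nat) (c y : R) := gam n m q * (c * y) ^ (2 * (n - m - q)) * (((-c) ^ q - c ^ q) / 2).

Lemma neg_pow_even : forall a k, (- a) ^ (2 * k) = a ^ (2 * k).
Proof. intros. rewrite !pow_mult. f_equal. ring. Qed.

Lemma diff_sum : forall n m c x0 x, 1/2 * (Bf n m (-c) x0 x - Bf n m c x0 x) = sum_f_R0 (fun q => Tq n m q c (x - x0)) n.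
Proof.
  intros. unfold Bf, Pa, Tq. rewrite <- minus_sum, scal_sum. apply sum_eq. intros q _.
  replace (- c * (x - x0)) with (- (c * (x - x0))) by ring. rewrite neg_pow_even. field.
Qed.

Lemma sum_drop1 : forall f N, (1 <= N)%nat -> sum_f_R0 f N - f 1%nat = sum_f_R0 (fun q => if (q =? 1)%nat then 0 else f q) N.
Proof.
  intros f N H. induction H.
  - simpl. ring.
  - simpl sum_f_R0 at 1 2. rewrite <- IHle. replace (m =? 0)%nat with false by (symmetry; apply Nat.eqb_neq; lia). ring.
Qed.

Lemma T1_main : forall n m x0 x lam, (m < n)%nat ->
  Tq n m 1 (2 * lam) (x - x0) = mainT n m x0 x lam.
Proof.
  intros. unfold Tq, mainT, psi_x, psi_xx. rewrite gam_q1. unfold Cz.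
  replace (m <=? n - 1)%nat with true by (symmetry; apply Nat.leb_le; lia).
  replace (2 * (n - m - 1))%nat with (2 * n - 2 * m - 2)%nat by lia.
  replace (2 * n - 2 * m - 1)%nat with (S (2 * n - 2 * m - 2)) by lia.
  rewrite Rpow_mult_distr, (Rpow_mult_distr 2 (x - x0)), Rpow_mult_distr.
  change (lam ^ S (2 * n - 2 * m - 2)) with (lam * lam ^ (2 * n - 2 * m - 2)). rewrite !pow_1. field.
Qed.

Lemma aux_bound : forall lam ay x0 k2 q N E, 1 <= lam -> 0 <= Rabs ay -> Rabs ay <= x0 ->
  (k2 + q <= N)%nat -> (k2 + q <= E)%nat ->
  (2 * lam * Rabs ay) ^ k2 * (2 * lam) ^ q <= (2 * (1 + x0)) ^ N * lam ^ E.
Proof.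
  intros lam ay x0 k2 q N E Hl H0 H1 HN HE.
  replace ((2 * lam * Rabs ay) ^ k2 * (2 * lam) ^ q) with (((2 * Rabs ay) ^ k2 * 2 ^ q) * lam ^ (k2 + q))
    by (rewrite pow_add, !Rpow_mult_distr; ring).
  apply Rmult_le_compat.
  - apply Rmult_le_pos; apply pow_le; lra.
  - apply pow_le; lra.
  - apply Rle_trans with ((2 * (1 + x0)) ^ k2 * (2 * (1 + x0)) ^ q).
    + apply Rmult_le_compat; try (apply pow_le; lra). apply pow_incr; lra. apply pow_incr; lra.
    + rewrite <- pow_add. apply Rle_pow; [lra|lia].
  - apply Rle_pow; auto.
Qed.

Lemma Tq_bound : forall n m q lam y x0, (q <> 1)%nat -> 1 <= lam -> Rabs y <= x0 ->
  Rabs (Tq n m q (2 * lam) y) <= Rabs (gam n m q) * (2 * (1 + x0)) ^ (2 * n) * lam ^ (2 * n - 2 * m - 3).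
Proof.
  intros n m q lam y x0 Hq Hl Hy.
  assert (Hx0 : 0 <= x0) by (generalize (Rabs_pos y); lra).
  assert (HM : 0 <= (2 * (1 + x0)) ^ (2 * n)) by (apply pow_le; lra).
  assert (HL : 0 <= lam ^ (2 * n - 2 * m - 3)) by (apply pow_le; lra).
  destruct (Nat.Even_or_Odd q) as [[k Hk]|[k Hk]].
  - unfold Tq. subst q. rewrite neg_pow_even.
    replace ((2 * lam) ^ (2 * k) - (2 * lam) ^ (2 * k)) with 0 by ring.
    rewrite Rdiv_0_l, Rmult_0_r, Rabs_R0.
    apply Rmult_le_pos; [apply Rmult_le_pos|]; auto; apply Rabs_pos.
  - destruct (le_lt_dec (m + q) n) as [Hmq|Hmq].
    2:{ unfold Tq. rewrite gam_zero by lia. rewrite !Rmult_0_l, !Rabs_R0. lra. }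
    assert (Hk1 : (1 <= k)%nat) by lia.
    unfold Tq. rewrite Hk.
    replace ((- (2 * lam)) ^ (2 * k + 1) - (2 * lam) ^ (2 * k + 1)) with (- 2 * (2 * lam) ^ (2 * k + 1)).
    2:{ rewrite !pow_add, neg_pow_even. simpl. ring. }
    rewrite <- Hk.
    replace (- 2 * (2 * lam) ^ q / 2) with (- (2 * lam) ^ q) by field.
    rewrite !Rabs_mult, Rabs_Ropp, <- !RPow_abs.
    rewrite !Rmult_assoc. apply Rmult_le_compat_l; [apply Rabs_pos|].
    replace (Rabs (2 * (lam * y))) with (2 * lam * Rabs y) by (rewrite !Rabs_mult, (Rabs_right 2), (Rabs_right lam) by lra; ring).
    rewrite (Rabs_right (2 * lam)) by lra.
    apply aux_bound; [auto|apply Rabs_pos|auto|lia|lia].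
Qed.

Definition Gs (n : nat) := sum_f_R0 (fun m => sum_f_R0 (fun q => Rabs (gam n m q)) n) n.
Definition Cc (n : nat) (x0 alpha beta : R) := (2 * (1 + x0)) ^ (2 * n) * Gs n + 2 * alpha ^ 2 * beta + 1.

Lemma sum_pos0 : forall f N, (forall j, 0 <= f j) -> 0 <= sum_f_R0 f N.
Proof. intros f N H. induction N; simpl. apply H. specialize (H (S N)). lra. Qed.

Lemma sum_nonneg_le : forall f N i, (forall j, 0 <= f j) -> (i <= N)%nat -> f i <= sum_f_R0 f N.
Proof.
  intros f N i Hf Hi. induction Hi.
  - destruct i; simpl. lra. assert (0 <= sum_f_R0 f i) by (apply sum_pos0; auto). specialize (Hf (S i)). lra.
  - simpl. specialize (Hf (S m)). lra.
Qed.

Lemma sum_mult_c : forall (f : nat -> R) (c : R) N,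
  sum_f_R0 (fun q => f q * c) N = sum_f_R0 f N * c.
Proof. intros. induction N; simpl. ring. rewrite IHN. ring. Qed.

Lemma BOUND : forall n m x0 x lam alpha beta, (2 <= n)%nat -> (m < n)%nat -> 1 <= lam ->
  Rabs (x - x0) <= x0 -> 0 <= beta ->
  Rabs (coefT n m x0 alpha beta x lam - mainT n m x0 x lam)
   <= Cc n x0 alpha beta * powerRZ lam (2 * Z.of_nat n - 2 * Z.of_nat m - 3)%Z.
Proof.
  intros n m x0 x lam alpha beta Hn Hm Hl Hy Hb.
  assert (Hx0 : 0 <= x0) by (generalize (Rabs_pos (x - x0)); lra).
  assert (HM : 0 <= (2 * (1 + x0)) ^ (2 * n)) by (apply pow_le; lra).
  assert (HG : 0 <= Gs n) by (apply sum_pos0; intros; apply sum_pos0; intros; apply Rabs_pos).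
  assert (E : coefT n m x0 alpha beta x lam - mainT n m x0 x lam =
     sum_f_R0 (fun q => if (q =? 1)%nat then 0 else Tq n m q (2 * lam) (x - x0)) n
     - (if (m =? 0)%nat then 2 * alpha ^ 2 * lam * beta else 0)).
  { unfold coefT. rewrite (diff_sum n m (2 * lam)), <- sum_drop1 by lia. rewrite T1_main by auto. ring. }
  rewrite E. clear E.
  destruct (Nat.eq_dec m (n - 1)) as [Hm1|Hm1].
  - rewrite sum_zero.
    + replace (m =? 0)%nat with false by (symmetry; apply Nat.eqb_neq; lia).
      rewrite Rminus_0_r, Rabs_R0. apply Rmult_le_pos; [|apply powerRZ_le; lra].
      unfold Cc. assert (0 <= alpha ^ 2) by (apply pow2_ge_0). nra.
    + intros q Hq. destruct (Nat.eq_dec q 1) as [->|Hq1]; [reflexivity|].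
      replace (q =? 1)%nat with false by (symmetry; apply Nat.eqb_neq; lia).
      unfold Tq. destruct q as [|q].
      * simpl. field.
      * rewrite gam_zero by lia. ring.
  - set (E := (2 * n - 2 * m - 3)%nat).
    replace (2 * Z.of_nat n - 2 * Z.of_nat m - 3)%Z with (Z.of_nat E) by (unfold E; lia).
    rewrite <- pow_powerRZ.
    assert (HE : 1 <= lam ^ E) by (apply pow_R1_Rle; lra).
    assert (HlE : lam <= lam ^ E) by (rewrite <- (pow_1 lam) at 1; apply Rle_pow; [lra|unfold E; lia]).
    eapply Rle_trans; [apply Rabs_triang|]. rewrite Rabs_Ropp.
    assert (B1 : Rabs (sum_f_R0 (fun q => if (q =? 1)%nat then 0 else Tq n m q (2 * lam) (x - x0)) n)
                 <= (2 * (1 + x0)) ^ (2 * n) * Gs n * lam ^ E).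
    { eapply Rle_trans; [apply Rabs_triang_gen|].
      apply Rle_trans with (sum_f_R0 (fun q => Rabs (gam n m q) * (2 * (1 + x0)) ^ (2 * n) * lam ^ E) n).
      - apply sum_Rle. intros q _. destruct (Nat.eq_dec q 1) as [->|Hq1].
        + simpl. rewrite Rabs_R0. apply Rmult_le_pos; [apply Rmult_le_pos|]; auto; try apply Rabs_pos; lra.
        + replace (q =? 1)%nat with false by (symmetry; apply Nat.eqb_neq; lia). apply Tq_bound; auto.
      - rewrite (sum_eq _ (fun q => Rabs (gam n m q) * ((2 * (1 + x0)) ^ (2 * n) * lam ^ E))) by (intros; ring).
        rewrite (sum_mult_c (fun q => Rabs (gam n m q))).
        assert (Hs : sum_f_R0 (fun q => Rabs (gam n m q)) n <= Gs n).
        { unfold Gs. apply (sum_nonneg_le (fun m => sum_f_R0 (fun q => Rabs (gam n m q)) n)); [|lia].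
          intros; apply sum_pos0; intros; apply Rabs_pos. }
        assert (0 <= (2 * (1 + x0)) ^ (2 * n) * lam ^ E) by (apply Rmult_le_pos; lra).
        nra. }

    assert (B2 : Rabs (if (m =? 0)%nat then 2 * alpha ^ 2 * lam * beta else 0) <= 2 * alpha ^ 2 * beta * lam ^ E).
    { assert (0 <= alpha ^ 2) by apply pow2_ge_0.
      destruct (m =? 0)%nat.
      - assert (0 <= 2 * alpha ^ 2 * beta) by (apply Rmult_le_pos; lra).
        rewrite Rabs_right.
        + replace (2 * alpha ^ 2 * lam * beta) with ((2 * alpha ^ 2 * beta) * lam) by ring.
          apply Rmult_le_compat_l; auto.
        + apply Rle_ge. replace (2 * alpha ^ 2 * lam * beta) with ((2 * alpha ^ 2 * beta) * lam) by ring.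
          apply Rmult_le_pos; lra.
      - rewrite Rabs_R0. apply Rmult_le_pos; [apply Rmult_le_pos; lra|lra]. }
    unfold Cc. replace (((2 * (1 + x0)) ^ (2 * n) * Gs n + 2 * alpha ^ 2 * beta + 1) * lam ^ E) with ((2 * (1 + x0)) ^ (2 * n) * Gs n * lam ^ E + 2 * alpha ^ 2 * beta * lam ^ E + lam ^ E) by ring. lra.
Qed.

Theorem theorem1p1 (T L alpha : R) (n : nat) (x0 t0 beta : R)
  (HT : 0 < T) (HL : 0 < L) (Halpha : alpha <> 0) (Hn : (2 <= n)%nat)
  (Hx0 : L < x0) (Ht0 : 0 < t0 < T) (Hbeta : 0 < beta) :
  exists (C : R) (Rm : nat -> R -> R -> R -> R),
    0 < C /\
    (forall m, (m < n)%nat -> forall lam, 1 <= lam ->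
       forall t x, continuous (fun p : R * R => Rm m (fst p) (snd p) lam) (t, x)) /\
    (forall m, (m < n)%nat ->
       forall t x lam, 0 <= t <= T -> 0 <= x <= L -> 1 <= lam ->
         Rabs (Rm m t x lam)
           <= C * powerRZ lam (2 * Z.of_nat n - 2 * Z.of_nat m - 3)%Z) /\
    (forall (lam : R) (v : R -> R -> R), 1 <= lam -> Cc_inf T L v ->
       let w := fun t x => exp (lam * psi x0 t0 beta t x) * v t x in
       sum_f_R0 (fun m =>
         dint T L (fun t x =>
           (INR n ^ 2 * Binomial.C (n - 1) m
              * lam ^ (2 * n - 2 * m - 1)
              * psi_x x0 x ^ (2 * n - 2 * m - 2) * psi_xx
            + Rm m t x lam) * (pdxn m w t x) ^ 2)) (n - 1)
       <= dint T L (fun t x =>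
            exp (2 * lam * psi x0 t0 beta t x)
            * (alpha * pdt v t x + pdxn n v t x) ^ 2)).

Proof.
  exists (Cc n x0 alpha beta), (fun m t x lam => coefT n m x0 alpha beta x lam - mainT n m x0 x lam).
  assert (Hx0p : 0 < x0) by lra.
  split; [|split; [|split]].
  - unfold Cc. assert (0 <= (2 * (1 + x0)) ^ (2 * n)) by (apply pow_le; lra).
    assert (0 <= Gs n) by (apply sum_pos0; intros; apply sum_pos0; intros; apply Rabs_pos).
    assert (0 <= alpha ^ 2) by apply pow2_ge_0.
    assert (0 <= 2 * alpha ^ 2 * beta) by (apply Rmult_le_pos; lra).
    assert (0 <= (2 * (1 + x0)) ^ (2 * n) * Gs n) by (apply Rmult_le_pos; lra). lra.
  - intros m Hm lam Hlam t x.
    set (h := fun y => coefT n m x0 alpha beta y lam - mainT n m x0 y lam).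
    change (continuous (fun p : R * R => h (snd p)) (t, x)).
    apply (continuous_comp (fun p : R * R => snd p) h).
    + apply continuous_snd.
    + simpl. unfold h, coefT, mainT, psi_x, psi_xx.
      assert (cB : forall N m s y, continuous (Bf N m s x0) y) by (intros; apply (cont_der _ _ _ (Bf_der _ _ _ _))).
      ct.
  - intros m Hm t x lam Ht Hx Hlam.
    apply BOUND; auto; try lia; try lra.
    rewrite Rabs_left by lra. lra.
  - intros lam v Hlam [Hsm [a [b [c [d [Ha [Hab [Hb [Hc [Hcd [Hd Hsupp]]]]]]]]]]].
    cbv zeta. cbv beta.
    rewrite (sum_eq _ (fun m => dint T L (fun t x => coefT n m x0 alpha beta x lam
               * (pdxn m (fun t x => exp (lam * psi x0 t0 beta t x) * v t x) t x) ^ 2))).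
    + unfold coefT. apply (MAIN T L alpha n x0 t0 beta lam v a b c d); auto; try lia; try lra.
    + intros m _. unfold dint. apply RInt_ext_R. intros t. apply RInt_ext_R. intros x. unfold mainT. ring.
Qed.
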